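(* Let $c=(c_1,c_2)$ be a differentiable map defined for $x\in\mathbb{R}$, $y>0$ (at least near the line $x=1/2$) such that $c(\tfrac12,y)=a(\tfrac12,y)$ for all $y$, $c_1(x,y)+x\,c_2(x,y)=\tfrac12$ for all $(x,y)$, and $\partial_xc_2(\tfrac12,y)=0$ for all $y$. Then for every fixed $\alpha>0$ the functions $(x,y)\mapsto\theta_{(x,y)}(c(x,y);\alpha)$ and $(x,y)\mapsto\widehat\theta_{(x,y)}(c(x,y);\alpha)$ have vanishing gradient at $(x,y)=(1/2,\sqrt3/2)$.
   Context: For $y>0$, $c=(c_1,c_2)\in\mathbb{R}^2$, $\alpha>0$: $\theta_{(x,y)}(c;\alpha)=\sum_{k,l\in\mathbb{Z}}\exp(-\tfrac{\pi\alpha}{y}((k+c_1)^2+2x(k+c_1)(l+c_2)+(x^2+y^2)(l+c_2)^2))$ and $\widehat\theta_{(x,y)}(c;\alpha)=\sum_{k,l\in\mathbb{Z}}\exp(-\tfrac{\pi\alpha}{y}(k^2+2xkl+(x^2+y^2)l^2))e^{2\pi i(kc_2-lc_1)}$. The circumcenter point $a(x,y)=(a_1,a_2)$ is $a_1=\frac{(1-x)(x^2+y^2)}{2y^2}$, $a_2=\frac{x^2+y^2-x}{2y^2}$. *)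

(* Defs.v *)
From Stdlib Require Import Reals ZArith.
From Coquelicot Require Import Coquelicot.
Open Scope R_scope.

(* Sum over Z of f : Z -> R, as sum over k >= 0 plus sum over k <= -1
   (Coquelicot's total Series; the theta sums are absolutely convergent). *)
Definition zsum (f : Z -> R) : R :=
  Series (fun n : nat => f (Z.of_nat n)) + Series (fun n : nat => f (- Z.of_nat (S n))%Z).

(* Sum over Z x Z, as an iterated sum (equal to the double sum by absolute convergence). *)
Definition z2sum (f : Z -> Z -> R) : R := zsum (fun k => zsum (fun l => f k l)).

Definition theta (x y c1 c2 alpha : R) : R :=
  z2sum (fun k l =>
    let u := IZR k + c1 in let v := IZR l + c2 in
    exp (- (PI * alpha / y) * (u ^ 2 + 2 * x * u * v + (x ^ 2 + y ^ 2) * v ^ 2))).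

Definition gw (x y alpha : R) (k l : Z) : R :=
  exp (- (PI * alpha / y) * (IZR k ^ 2 + 2 * x * IZR k * IZR l + (x ^ 2 + y ^ 2) * IZR l ^ 2)).

(* hat-theta_{(x,y)}(c; alpha) is complex-valued: we define its real and
   imaginary parts (termwise real / imaginary parts of the complex series,
   e^{i t} = cos t + i sin t). *)
Definition thetahat_re (x y c1 c2 alpha : R) : R :=
  z2sum (fun k l => gw x y alpha k l * cos (2 * PI * (IZR k * c2 - IZR l * c1))).
Definition thetahat_im (x y c1 c2 alpha : R) : R :=
  z2sum (fun k l => gw x y alpha k l * sin (2 * PI * (IZR k * c2 - IZR l * c1))).

(* circumcenter point a(x,y) *)
Definition a1 (x y : R) : R := (1 - x) * (x ^ 2 + y ^ 2) / (2 * y ^ 2).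
Definition a2 (x y : R) : R := (x ^ 2 + y ^ 2 - x) / (2 * y ^ 2).

(* Main.v *)
Require Import Defs.
From Stdlib Require Import Reals ZArith Lra Lia Psatz.
From Coquelicot Require Import Coquelicot.
Open Scope R_scope.

Definition ZP (n : nat) : Z := Z.of_nat n.
Definition ZN (n : nat) : Z := (- Z.of_nat (S n))%Z.

Definition AS (h : Z -> R) : Prop :=
  ex_series (fun n => Rabs (h (ZP n))) /\ ex_series (fun n => Rabs (h (ZN n))).

Lemma zsum_ext (u v : Z -> R) : (forall n, u n = v n) -> zsum u = zsum v.
Proof. intros H. unfold zsum. f_equal; apply Series_ext; intro; apply H. Qed.

Lemma z2sum_ext (f g : Z -> Z -> R) : (forall k l, f k l = g k l) -> z2sum f = z2sum g.
Proof. intros H. unfold z2sum. apply zsum_ext. intro k. apply zsum_ext. auto. Qed.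

Lemma exs_le (a b : nat -> R) : (forall n, Rabs (a n) <= b n) -> ex_series b -> ex_series a.
Proof. intros H Hb. apply (@ex_series_le R_AbsRing R_CompleteNormedModule a b); auto. Qed.

Lemma exs_abs_le (a b : nat -> R) : (forall n, Rabs (a n) <= b n) -> ex_series b ->
   ex_series (fun n => Rabs (a n)).
Proof. intros H Hb. apply (@ex_series_le R_AbsRing R_CompleteNormedModule _ b); auto. intro n. unfold norm; simpl. 
  unfold abs; simpl. rewrite Rabs_Rabsolu. auto. Qed.

Lemma AS_le (u v : Z -> R) : AS v -> (forall n, Rabs (u n) <= Rabs (v n)) -> AS u.
Proof. intros [H1 H2] H. split; eapply exs_abs_le; [intro n; apply H| exact H1 | intro n; apply H | exact H2]. Qed.

Lemma ser_abs_le (a b : nat -> R) : (forall n, Rabs (a n) <= b n) -> ex_series b ->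
  Rabs (Series a) <= Series b.
Proof. intros H Hb. eapply Rle_trans. apply Series_Rabs. eapply exs_abs_le; eauto.
  apply Series_le; auto. intro n; split; auto. apply Rabs_pos. Qed.

Lemma zsum_abs_le (u v : Z -> R) : AS v -> (forall n, Rabs (u n) <= v n) ->
  Rabs (zsum u) <= zsum v.
Proof. intros [H1 H2] H. unfold zsum.
  assert (Hv : forall n, 0 <= v n) by (intro n; eapply Rle_trans; [apply Rabs_pos| apply H]).
  assert (E1 : ex_series (fun n => v (Z.of_nat n))).
  { eapply ex_series_ext. 2: exact H1. intro n. simpl. unfold ZP. rewrite Rabs_pos_eq; auto. }
  assert (E2 : ex_series (fun n => v (- Z.of_nat (S n))%Z)).
  { eapply ex_series_ext. 2: exact H2. intro n. simpl. unfold ZN. rewrite Rabs_pos_eq; auto. }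
  eapply Rle_trans. apply Rabs_triang. apply Rplus_le_compat; apply ser_abs_le; auto. Qed.

Lemma AS_ex1 u : AS u -> ex_series (fun n => u (Z.of_nat n)).
Proof. intros [H _]. apply ex_series_Rabs. exact H. Qed.
Lemma AS_ex2 u : AS u -> ex_series (fun n => u (- Z.of_nat (S n))%Z).
Proof. intros [_ H]. apply ex_series_Rabs. exact H. Qed.

Lemma AS_plus u v : AS u -> AS v -> AS (fun n => u n + v n).
Proof. intros [H1 H2] [H3 H4]. split.
 - apply (exs_abs_le _ (fun n => Rabs (u (ZP n)) + Rabs (v (ZP n)))). intro; apply Rabs_triang.
   apply (ex_series_plus _ _ H1 H3).
 - apply (exs_abs_le _ (fun n => Rabs (u (ZN n)) + Rabs (v (ZN n)))). intro; apply Rabs_triang.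
   apply (ex_series_plus _ _ H2 H4). Qed.

Lemma AS_scal c u : AS u -> AS (fun n => c * u n).
Proof. intros [H1 H2]. split.
 - apply (exs_abs_le _ (fun n => Rabs c * Rabs (u (ZP n)))). intro; rewrite Rabs_mult; lra.
   apply (ex_series_scal_l (Rabs c) _ H1).
 - apply (exs_abs_le _ (fun n => Rabs c * Rabs (u (ZN n)))). intro; rewrite Rabs_mult; lra.
   apply (ex_series_scal_l (Rabs c) _ H2). Qed.

Lemma zsum_plus u v : AS u -> AS v -> zsum (fun n => u n + v n) = zsum u + zsum v.
Proof. intros Hu Hv. unfold zsum. rewrite !Series_plus; try apply AS_ex1; try apply AS_ex2; auto. lra. Qed.

Lemma zsum_scal c u : zsum (fun n => c * u n) = c * zsum u.
Proof. unfold zsum. rewrite !Series_scal_l. lra. Qed.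

Lemma Series_zero : Series (fun _ : nat => 0) = 0.
Proof. pose proof (Series_scal_l 0 (fun _ : nat => 0)) as H. rewrite Rmult_0_l in H.
  rewrite <- H. apply Series_ext. intro; lra. Qed.

Lemma zsum_zero : zsum (fun _ => 0) = 0.
Proof. unfold zsum. rewrite Series_zero. lra. Qed.

Lemma exs_shift (a b : nat -> R) : (forall n, a (S n) = b n) -> ex_series b -> ex_series a.
Proof. intros H Hb. apply (proj2 (ex_series_incr_1 a)). eapply ex_series_ext. 2: exact Hb. intro n; simpl; rewrite H; auto. Qed.
Lemma exs_unshift (a b : nat -> R) : (forall n, a n = b (S n)) -> ex_series b -> ex_series a.
Proof. intros H Hb. apply (proj1 (ex_series_incr_1 b)) in Hb. eapply ex_series_ext. 2: exact Hb. intro n; simpl; rewrite H; auto. Qed.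

Lemma AS_neg u : AS u -> AS (fun n => u (- n)%Z).
Proof. intros [H1 H2]. split.
 - eapply exs_shift. 2: exact H2. intro n. unfold ZN, ZP. apply (f_equal Rabs), f_equal; lia.
 - eapply exs_unshift. 2: exact H1. intro n. unfold ZN, ZP. apply (f_equal Rabs), f_equal; lia. Qed.

Lemma zsum_neg u : AS u -> zsum (fun n => u (- n)%Z) = zsum u.
Proof. intros Hu. pose proof (AS_ex1 _ Hu) as E1. pose proof (AS_ex2 _ Hu) as E2.
  pose proof (AS_ex1 _ (AS_neg _ Hu)) as E3.
  unfold zsum. rewrite (Series_incr_1 (fun n => u (- Z.of_nat n)%Z)) by exact E3.
  rewrite (Series_incr_1 (fun n => u (Z.of_nat n))) by exact E1.
  rewrite (Series_ext (fun n => u (- - Z.of_nat (S n))%Z) (fun k => u (Z.of_nat (S k)))).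
  2: { intro n. apply f_equal; lia. }
  simpl. lra. Qed.

Lemma AS_shift1 u : AS u -> AS (fun n => u (n + 1)%Z).
Proof. intros [H1 H2]. split.
 - eapply exs_unshift. 2: exact H1. intro n. unfold ZP. apply (f_equal Rabs), f_equal; lia.
 - eapply exs_shift. 2: exact H2. intro n. unfold ZN. apply (f_equal Rabs), f_equal; lia. Qed.

Lemma zsum_shift1 u : AS u -> zsum (fun n => u (n + 1)%Z) = zsum u.
Proof. intros Hu. pose proof (AS_ex1 _ Hu) as E1. pose proof (AS_ex2 _ Hu) as E2.
  pose proof (AS_ex2 _ (AS_shift1 _ Hu)) as E3.
  unfold zsum. rewrite (Series_incr_1 (fun n => u (- Z.of_nat (S n) + 1)%Z)) by exact E3.
  rewrite (Series_incr_1 (fun n => u (Z.of_nat n))) by exact E1.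
  rewrite (Series_ext (fun n => u (Z.of_nat n + 1)%Z) (fun k => u (Z.of_nat (S k)))).
  2: { intro n. apply f_equal; lia. }
  rewrite (Series_ext (fun k => u (- Z.of_nat (S (S k)) + 1)%Z) (fun n => u (- Z.of_nat (S n))%Z)).
  2: { intro n. apply f_equal; lia. }
  replace (- Z.of_nat 1 + 1)%Z with 0%Z by lia. simpl. lra. Qed.

Lemma zsum_shift u c : AS u -> AS (fun n => u (n + c)%Z) /\ zsum (fun n => u (n + c)%Z) = zsum u.
Proof. intros Hu. induction c using Z.peano_ind.
 - split. eapply AS_le. exact Hu. intro n. rewrite Z.add_0_r. lra.
   apply zsum_ext. intro n. rewrite Z.add_0_r. auto.
 - destruct IHc as [H1 H2]. pose proof (AS_shift1 _ H1) as H3. split.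
   + eapply AS_le. exact H3. intro n. replace (n + Z.succ c)%Z with (n + 1 + c)%Z by lia. lra.
   + rewrite <- H2, <- (zsum_shift1 _ H1). apply zsum_ext. intro n. cbv beta. apply f_equal; lia.
 - destruct IHc as [H1 H2].
   assert (H3 : AS (fun n => u (n + Z.pred c)%Z)).
   { destruct H1 as [A1 A2]. split.
     - eapply exs_shift. 2: exact A1. intro n. unfold ZP. apply (f_equal Rabs), f_equal; lia.
     - eapply exs_unshift. 2: exact A2. intro n. unfold ZN. apply (f_equal Rabs), f_equal; lia. }
   split. auto. rewrite <- H2, <- (zsum_shift1 _ H3). apply zsum_ext. intro n. cbv beta. apply f_equal; lia. Qed.

Lemma zsum_refl u c : AS u -> zsum (fun n => u (- n + c)%Z) = zsum u.
Proof. intros Hu. destruct (zsum_shift u c Hu) as [H1 H2].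
  rewrite <- H2. rewrite <- (zsum_neg _ H1). apply zsum_ext. intro n. cbv beta. apply f_equal; lia. Qed.

Lemma AS_refl u c : AS u -> AS (fun n => u (- n + c)%Z).
Proof. intros Hu. destruct (zsum_shift u c Hu) as [H1 H2]. eapply AS_le. apply (AS_neg _ H1).
  intro n. replace (- n + c)%Z with (- n + c)%Z by lia. lra. Qed.

Lemma exp_le x y : x <= y -> exp x <= exp y.
Proof. intros H. destruct (Rle_lt_or_eq_dec _ _ H) as [H1|H1]. left; apply exp_increasing; auto. subst; lra. Qed.

Lemma exs_scal (c : R) (a : nat -> R) : ex_series a -> ex_series (fun n => c * a n).
Proof. intros H. apply (@ex_series_scal_l R_AbsRing R_NormedModule c a H). Qed.
Lemma exs_scal_r (c : R) (a : nat -> R) : ex_series a -> ex_series (fun n => a n * c).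
Proof. intros H. apply (ex_series_ext (fun n => c * a n)). intro; simpl; ring. apply exs_scal; auto. Qed.
Lemma exs_plus (a b : nat -> R) : ex_series a -> ex_series b -> ex_series (fun n => a n + b n).
Proof. intros H1 H2. apply (@ex_series_plus R_AbsRing R_NormedModule a b H1 H2). Qed.
Lemma exs_tail (a : nat -> R) k : ex_series a -> ex_series (fun n => a (k + n)%nat).
Proof. intros H. apply (proj1 (ex_series_incr_n a k)). auto. Qed.

Lemma sum_Series (g : nat -> nat -> R) N : (forall n, ex_series (g n)) ->
  sum_f_R0 (fun n => Series (g n)) N = Series (fun m => sum_f_R0 (fun n => g n m) N).
Proof. intros Hg. induction N as [|N IH]; simpl.
 - apply Series_ext. intros; reflexivity.
 - rewrite IH. rewrite <- Series_plus. apply Series_ext. intros; reflexivity.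
   2: apply Hg.
   clear IH. induction N as [|N IH]; simpl. apply Hg.
   apply (ex_series_plus _ _ IH (Hg (S N))). Qed.

Lemma ex_series_sum (g : nat -> nat -> R) N : (forall n, ex_series (g n)) ->
  ex_series (fun m => sum_f_R0 (fun n => g n m) N).
Proof. intros Hg. induction N as [|N IH]; simpl. apply Hg. apply (ex_series_plus _ _ IH (Hg (S N))). Qed.

Lemma tail_lim (a : nat -> R) : ex_series a -> forall eps, 0 < eps -> exists N0, forall N, (N0 <= N)%nat ->
   Rabs (Series a - sum_f_R0 a N) < eps.
Proof. intros Ha eps Heps. pose proof (Series_correct _ Ha) as H. apply is_series_Reals in H.
  destruct (H eps Heps) as [N0 HN]. exists N0. intros N HN'. specialize (HN N HN'). unfold R_dist in HN.
  rewrite Rabs_minus_sym. auto. Qed.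

Lemma fubini_nat (g : nat -> nat -> R) (a b : nat -> R) :
  (forall n, 0 <= a n) -> (forall m, 0 <= b m) ->
  (forall n m, Rabs (g n m) <= a n * b m) -> ex_series a -> ex_series b ->
  Series (fun n => Series (g n)) = Series (fun m => Series (fun n => g n m)).
Proof. intros Ha0 Hb0 Hg Ha Hb.
  assert (Hr : forall n, ex_series (g n)).
  { intro n. apply (exs_le _ (fun m => a n * b m)). auto. apply (ex_series_scal_l (a n) _ Hb). }
  assert (Hc : forall m, ex_series (fun n => g n m)).
  { intro m. apply (exs_le _ (fun n => a n * b m)). auto.
    apply (ex_series_ext (fun n => b m * a n)). intro; simpl; ring. apply (ex_series_scal_l (b m) _ Ha). }
  set (T := Series (fun m => Series (fun n => g n m))).
  apply is_series_unique. apply is_series_Reals. intros eps Heps.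
  set (K := Series b + 1).
  assert (HK : 0 < K). { unfold K. assert (0 <= Series b). { rewrite <- Series_zero. apply Series_le; [intro n; split; [lra | auto] | auto]. } lra. }
  destruct (tail_lim a Ha (eps / K)) as [N0 HN0]. apply Rdiv_lt_0_compat; auto.
  exists N0. intros N HN. unfold R_dist. rewrite sum_Series by auto. unfold T.
  assert (E1 : ex_series (fun m => sum_f_R0 (fun n => g n m) N)) by (apply ex_series_sum; auto).
  assert (E2 : ex_series (fun m => Series (fun n => g n m))).
  { apply (exs_le _ (fun m => Series a * b m)). 2: apply (ex_series_scal_l _ _ Hb).
       intro m. eapply Rle_trans. apply (ser_abs_le _ (fun n => a n * b m)). auto.
       apply (ex_series_ext (fun n => b m * a n)). intro; simpl; ring. apply (ex_series_scal_l (b m) _ Ha).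
       rewrite Series_scal_r. lra. }
  rewrite <- (Series_minus _ _ E1 E2).
  assert (Htail : forall m, Rabs (sum_f_R0 (fun n => g n m) N - Series (fun n => g n m)) <= b m * Rabs (Series a - sum_f_R0 a N)).
  { intro m. rewrite (Series_incr_n (fun n => g n m) (S N)) by (lia || auto). rewrite (Series_incr_n a (S N)) by (lia || auto).
    simpl Init.Nat.pred. replace (sum_f_R0 (fun n => g n m) N - (sum_f_R0 (fun n => g n m) N + Series (fun k => g (S N + k)%nat m))) with (- Series (fun k => g (S N + k)%nat m)) by ring.
    replace (sum_f_R0 a N + Series (fun k => a (S N + k)%nat) - sum_f_R0 a N) with (Series (fun k => a (S N + k)%nat)) by ring.
    rewrite Rabs_Ropp. eapply Rle_trans. apply (ser_abs_le _ (fun k => b m * a (S N + k)%nat)).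
    intro k. rewrite Rmult_comm. auto. apply exs_scal. apply exs_tail. auto.
    rewrite Series_scal_l. apply Rmult_le_compat_l; auto. apply Rle_abs. }
  eapply Rle_lt_trans. apply (ser_abs_le _ (fun m => b m * Rabs (Series a - sum_f_R0 a N))). auto.
  apply exs_scal_r. auto. rewrite Series_scal_r.
  specialize (HN0 N HN). 
  assert (0 <= Series b). { rewrite <- Series_zero. apply Series_le; [intro n; split; [lra | auto] | auto]. }
  apply Rle_lt_trans with (K * Rabs (Series a - sum_f_R0 a N)).
  apply Rmult_le_compat_r. apply Rabs_pos. unfold K; lra.
  replace eps with (K * (eps / K)) by (field; lra). apply Rmult_lt_compat_l; auto. Qed.

Definition gs (e : R) (k : Z) : R := exp (- e * IZR k ^ 2).

Lemma gs_pos e k : 0 < gs e k.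
Proof. apply exp_pos. Qed.

Lemma pow_exp e n : exp (- e) ^ n = exp (- e * INR n).
Proof. induction n as [|n IH]. simpl. rewrite Rmult_0_r, exp_0. auto.
  rewrite S_INR. simpl. rewrite IH, <- exp_plus. f_equal. ring. Qed.

Lemma IZR_ZP n : IZR (ZP n) = INR n.
Proof. unfold ZP. rewrite <- INR_IZR_INZ. auto. Qed.
Lemma IZR_ZN n : IZR (ZN n) = - INR (S n).
Proof. unfold ZN. rewrite opp_IZR, <- INR_IZR_INZ. auto. Qed.

Lemma gs_geom_P e n : 0 < e -> gs e (ZP n) <= exp (- e) ^ n.
Proof. intros He. unfold gs. rewrite pow_exp, IZR_ZP. apply exp_le.
  assert (INR n <= INR n ^ 2). { destruct n. simpl; lra. rewrite S_INR. pose proof (pos_INR n). nra. } nra. Qed.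
Lemma gs_geom_N e n : 0 < e -> gs e (ZN n) <= exp (- e) ^ n.
Proof. intros He. unfold gs. rewrite pow_exp, IZR_ZN. apply exp_le. rewrite S_INR.
  pose proof (pos_INR n). nra. Qed.

Lemma exs_geom e : 0 < e -> ex_series (fun n => exp (- e) ^ n).
Proof. intros He. apply ex_series_geom. rewrite Rabs_pos_eq by (apply Rlt_le, exp_pos).
  rewrite <- exp_0. apply exp_increasing. lra. Qed.

Lemma exs_gs_P e : 0 < e -> ex_series (fun n => gs e (ZP n)).
Proof. intros He. apply (exs_le _ (fun n => exp (- e) ^ n)). intro n. rewrite Rabs_pos_eq by (apply Rlt_le, gs_pos); apply gs_geom_P; auto.
  apply exs_geom; auto. Qed.
Lemma exs_gs_N e : 0 < e -> ex_series (fun n => gs e (ZN n)).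
Proof. intros He. apply (exs_le _ (fun n => exp (- e) ^ n)). intro n. rewrite Rabs_pos_eq by (apply Rlt_le, gs_pos); apply gs_geom_N; auto.
  apply exs_geom; auto. Qed.

Lemma AS_gs e : 0 < e -> AS (gs e).
Proof. intros He. split.
 - eapply ex_series_ext. 2: apply (exs_gs_P e He). intro n; simpl. rewrite Rabs_pos_eq; auto. apply Rlt_le, gs_pos.
 - eapply ex_series_ext. 2: apply (exs_gs_N e He). intro n; simpl. rewrite Rabs_pos_eq; auto. apply Rlt_le, gs_pos. Qed.

Definition G2 (f : Z -> Z -> R) : Prop :=
  exists e M, 0 < e /\ forall k l, Rabs (f k l) <= M * (gs e k * gs e l).

Lemma G2_M f : G2 f -> exists e M, 0 < e /\ 0 <= M /\ forall k l, Rabs (f k l) <= M * (gs e k * gs e l).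
Proof. intros [e [M [He H]]]. exists e, M. repeat split; auto.
  specialize (H 0%Z 0%Z). pose proof (gs_pos e 0). pose proof (Rabs_pos (f 0%Z 0%Z)).
  assert (0 <= M * (gs e 0 * gs e 0)) by lra. apply Rmult_le_reg_r with (gs e 0 * gs e 0). nra. lra. Qed.

Lemma G2_row f k : G2 f -> AS (f k).
Proof. intros Hf. destruct (G2_M f Hf) as [e [M [He [HM H]]]].
  apply (AS_le _ (fun l => (M * gs e k) * gs e l)). apply AS_scal, AS_gs; auto.
  intro l. pose proof (gs_pos e k); pose proof (gs_pos e l). rewrite (Rabs_pos_eq (M * gs e k * gs e l)).
  rewrite Rmult_assoc. auto. apply Rmult_le_pos. nra. lra. Qed.

Lemma zsum_nonneg v : AS v -> (forall n, 0 <= v n) -> 0 <= zsum v.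
Proof. intros H1 H2. pose proof (zsum_abs_le (fun _ => 0) v H1) as X. rewrite zsum_zero, Rabs_R0 in X.
  apply X. intro n; cbv beta; try rewrite Rabs_R0; auto. Qed.

Lemma G2_outer_bound f : G2 f -> exists e M, 0 < e /\ 0 <= M /\ forall k, Rabs (zsum (f k)) <= M * gs e k.
Proof. intros Hf. destruct (G2_M f Hf) as [e [M [He [HM H]]]].
  exists e, (M * zsum (gs e)). repeat split; auto.
  - apply Rmult_le_pos; auto. apply zsum_nonneg. apply AS_gs; auto. intro; apply Rlt_le, gs_pos.
  - intro k. eapply Rle_trans. apply (zsum_abs_le _ (fun l => (M * gs e k) * gs e l)).
    apply AS_scal, AS_gs; auto. intro l. rewrite Rmult_assoc. auto.
    rewrite zsum_scal. right. ring. Qed.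

Ltac pushZ := repeat (rewrite ?plus_IZR, ?minus_IZR, ?opp_IZR, ?mult_IZR).

Lemma AS_outer f : G2 f -> AS (fun k => zsum (f k)).
Proof. intros Hf. destruct (G2_outer_bound f Hf) as [e [M [He [HM H]]]].
  apply (AS_le _ (fun k => M * gs e k)). apply AS_scal, AS_gs; auto.
  intro k. rewrite (Rabs_pos_eq (M * gs e k)). auto. pose proof (gs_pos e k). nra. Qed.

Lemma z2sum_plus f g : G2 f -> G2 g -> z2sum (fun k l => f k l + g k l) = z2sum f + z2sum g.
Proof. intros Hf Hg. unfold z2sum. rewrite <- zsum_plus by (apply AS_outer; auto).
  apply zsum_ext. intro k. apply zsum_plus; apply G2_row; auto. Qed.

Lemma z2sum_scal c f : z2sum (fun k l => c * f k l) = c * z2sum f.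
Proof. unfold z2sum. rewrite <- zsum_scal. apply zsum_ext. intro k. apply zsum_scal. Qed.

Lemma z2sum_zero : z2sum (fun _ _ => 0) = 0.
Proof. unfold z2sum. rewrite (zsum_ext _ (fun _ => 0)). apply zsum_zero. intro; apply zsum_zero. Qed.

Lemma z2sum_abs_le f g : G2 g -> (forall k l, Rabs (f k l) <= g k l) -> Rabs (z2sum f) <= z2sum g.
Proof. intros Hg H. unfold z2sum. apply zsum_abs_le. apply AS_outer; auto.
  intro k. apply zsum_abs_le. apply G2_row; auto. auto. Qed.

Lemma G2_le f g : G2 g -> (forall k l, Rabs (f k l) <= Rabs (g k l)) -> G2 f.
Proof. intros [e [M [He H]]] H2. exists e, M. split; auto. intros k l. eapply Rle_trans; eauto. Qed.

Lemma G2_plus f g : G2 f -> G2 g -> G2 (fun k l => f k l + g k l).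
Proof. intros Hf Hg. destruct (G2_M f Hf) as [e1 [M1 [He1 [HM1 H1]]]]. destruct (G2_M g Hg) as [e2 [M2 [He2 [HM2 H2]]]].
  exists (Rmin e1 e2), (M1 + M2). split. apply Rmin_glb_lt; auto.
  intros k l. eapply Rle_trans. apply Rabs_triang.
  assert (A : forall (e : R) (k : Z), gs e1 k <= gs (Rmin e1 e2) k /\ gs e2 k <= gs (Rmin e1 e2) k).
  { intros e k0. unfold gs. split; apply exp_le; pose proof (pow2_ge_0 (IZR k0)); 
    pose proof (Rmin_l e1 e2); pose proof (Rmin_r e1 e2); nra. }
  destruct (A 0 k) as [A1 A2]. destruct (A 0 l) as [A3 A4].
  specialize (H1 k l). specialize (H2 k l). pose proof (gs_pos e1 k). pose proof (gs_pos e1 l).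
  pose proof (gs_pos e2 k). pose proof (gs_pos e2 l).
  assert (gs e1 k * gs e1 l <= gs (Rmin e1 e2) k * gs (Rmin e1 e2) l) by (apply Rmult_le_compat; lra).
  assert (gs e2 k * gs e2 l <= gs (Rmin e1 e2) k * gs (Rmin e1 e2) l) by (apply Rmult_le_compat; lra).
  nra. Qed.

Lemma G2_scal c f : G2 f -> G2 (fun k l => c * f k l).
Proof. intros [e [M [He H]]]. exists e, (Rabs c * M). split; auto. intros k l. rewrite Rabs_mult, Rmult_assoc.
  apply Rmult_le_compat_l. apply Rabs_pos. auto. Qed.

Lemma G2_swap f : G2 f -> G2 (fun k l => f l k).
Proof. intros [e [M [He H]]]. exists e, M. split; auto. intros k l. rewrite (Rmult_comm (gs e k)). auto. Qed.

Lemma G2_sigma f c : G2 f -> G2 (fun k l => f (- k - l + c)%Z l).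
Proof. intros Hf. destruct (G2_M f Hf) as [e [M [He [HM H]]]].
  exists (e / 4), (M * exp (e * IZR c ^ 2)). split. lra.
  intros k l. eapply Rle_trans. apply H. rewrite Rmult_assoc. apply Rmult_le_compat_l; auto.
  unfold gs. rewrite <- !exp_plus. apply exp_le. pushZ.
  set (K := IZR k). set (L := IZR l). set (C := IZR c).
  set (A := - K - L + C). assert (HK : K = - A - L + C) by (unfold A; ring).
  assert (K^2 <= 3 * (A^2 + L^2 + C^2)) by (rewrite HK; pose proof (pow2_ge_0 (A - L)); pose proof (pow2_ge_0 (L + C)); pose proof (pow2_ge_0 (A + C)); nra).
  assert ((K^2 + L^2) / 4 - C^2 <= A^2 + L^2) by nra. nra. Qed.

Definition good (X : nat -> Z) := forall e, 0 < e -> ex_series (fun n => gs e (X n)).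
Lemma good_ZP : good ZP. Proof. intros e He. apply exs_gs_P; auto. Qed.
Lemma good_ZN : good ZN. Proof. intros e He. apply exs_gs_N; auto. Qed.

Definition Qd (f : Z -> Z -> R) (X Y : nat -> Z) := Series (fun n => Series (fun m => f (X n) (Y m))).

Lemma exs_inner f (X Y : nat -> Z) n : G2 f -> good Y -> ex_series (fun m => f (X n) (Y m)).
Proof. intros Hf HY. destruct (G2_M f Hf) as [e [M [He [HM H]]]].
  apply (exs_le _ (fun m => (M * gs e (X n)) * gs e (Y m))). intro m. rewrite Rmult_assoc; auto.
  apply exs_scal. apply HY; auto. Qed.

Lemma exs_row f (X Y : nat -> Z) : G2 f -> good X -> good Y -> ex_series (fun n => Series (fun m => f (X n) (Y m))).
Proof. intros Hf HX HY. destruct (G2_M f Hf) as [e [M [He [HM H]]]].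
  apply (exs_le _ (fun n => gs e (X n) * (M * Series (fun m => gs e (Y m))))).
  2: apply exs_scal_r; apply HX; auto.
  intro n. eapply Rle_trans. apply (ser_abs_le _ (fun m => (M * gs e (X n)) * gs e (Y m))).
  intro m. rewrite Rmult_assoc; auto. apply exs_scal. apply HY; auto.
  rewrite Series_scal_l. right; ring. Qed.

Lemma Qd_swap f (X Y : nat -> Z) : G2 f -> good X -> good Y -> Qd (fun k l => f l k) X Y = Qd f Y X.
Proof. intros Hf HX HY. destruct (G2_M f Hf) as [e [M [He [HM H]]]]. unfold Qd.
  apply (fubini_nat (fun n m => f (Y m) (X n)) (fun n => M * gs e (X n)) (fun m => gs e (Y m))).
  intro; pose proof (gs_pos e (X n)); nra. intro; apply Rlt_le, gs_pos.
  intros n m. eapply Rle_trans. apply H. right. ring.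
  apply exs_scal. apply HX; auto. apply HY; auto. Qed.

Lemma z2sum_quad f : G2 f -> z2sum f = Qd f ZP ZP + Qd f ZP ZN + Qd f ZN ZP + Qd f ZN ZN.
Proof. intros Hf. unfold Qd.
  pose proof (exs_row f ZP ZP Hf good_ZP good_ZP) as E1.
  pose proof (exs_row f ZP ZN Hf good_ZP good_ZN) as E2.
  pose proof (exs_row f ZN ZP Hf good_ZN good_ZP) as E3.
  pose proof (exs_row f ZN ZN Hf good_ZN good_ZN) as E4.
  rewrite Rplus_assoc. rewrite <- (Series_plus _ _ E1 E2), <- (Series_plus _ _ E3 E4). unfold z2sum, zsum, ZP, ZN. cbv beta. f_equal; apply Series_ext; intro n; f_equal; apply Series_ext; intro m; reflexivity. Qed.

Lemma z2sum_swap f : G2 f -> z2sum (fun k l => f l k) = z2sum f.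
Proof. intros Hf. rewrite z2sum_quad by (apply G2_swap; auto). rewrite (z2sum_quad f Hf).
  rewrite (Qd_swap f ZP ZP), (Qd_swap f ZP ZN), (Qd_swap f ZN ZP), (Qd_swap f ZN ZN); auto using good_ZP, good_ZN. ring. Qed.

Lemma z2sum_sigma f c : G2 f -> z2sum (fun k l => f (- k - l + c)%Z l) = z2sum f.
Proof. intros Hf. rewrite <- z2sum_swap by (apply G2_sigma; auto).
  rewrite <- (z2sum_swap f Hf). unfold z2sum. apply zsum_ext. intro k.
  rewrite <- (zsum_refl (fun l => f l k) (- k + c)). apply zsum_ext. intro l. f_equal. lia.
  apply (G2_row (fun k l => f l k)). apply G2_swap; auto. Qed.

Lemma G2_rot f c : G2 f -> G2 (fun k l => f (- k - l + c)%Z k).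
Proof. intros Hf. apply (G2_le _ (fun k l => (fun a b => f (- a - b + c)%Z b) l k)).
  apply G2_swap, G2_sigma; auto. intros k l. right. f_equal. f_equal. lia. Qed.

Lemma z2sum_rot f c : G2 f -> z2sum (fun k l => f (- k - l + c)%Z k) = z2sum f.
Proof. intros Hf. rewrite <- (z2sum_sigma f c Hf).
  rewrite <- (z2sum_swap (fun k l => f (- k - l + c)%Z l)) by (apply G2_sigma; auto).
  apply z2sum_ext. intros k l. f_equal. lia. Qed.

Lemma refl0 f c : G2 f -> (forall k l, f (- k - l + c)%Z l = - f k l) -> z2sum f = 0.
Proof. intros Hf H. pose proof (z2sum_sigma f c Hf) as X. rewrite (z2sum_ext _ (fun k l => -1 * f k l)) in X.
  rewrite z2sum_scal in X. lra. intros; rewrite H; ring. Qed.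

Lemma rot0 (w g : Z -> Z -> R) c : G2 (fun k l => w k l * g k l) ->
  (forall k l, w (- k - l + c)%Z k = w k l) ->
  (forall k l, g k l + g (- k - l + c)%Z k + g (- (- k - l + c) - k + c)%Z (- k - l + c)%Z = 0) ->
  z2sum (fun k l => w k l * g k l) = 0.
Proof. intros H0 Hw Hg. set (F0 := fun k l => w k l * g k l).
  set (F1 := fun k l => w k l * g (- k - l + c)%Z k).
  set (F2 := fun k l => w k l * g (- (- k - l + c) - k + c)%Z (- k - l + c)%Z).
  assert (E1 : z2sum F0 = z2sum F1).
  { rewrite <- (z2sum_rot F0 c H0). apply z2sum_ext. intros k l. unfold F0, F1. rewrite Hw. auto. }
  assert (H1 : G2 F1).
  { apply (G2_le _ (fun k l => F0 (- k - l + c)%Z k)). apply G2_rot; auto. intros k l. unfold F0, F1. rewrite Hw. lra. }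
  assert (E2 : z2sum F1 = z2sum F2).
  { rewrite <- (z2sum_rot F1 c H1). apply z2sum_ext. intros k l. unfold F1, F2. rewrite Hw. auto. }
  assert (H2 : G2 F2).
  { apply (G2_le _ (fun k l => F1 (- k - l + c)%Z k)). apply G2_rot; auto. intros k l. unfold F1, F2. rewrite Hw. lra. }
  assert (E3 : z2sum (fun k l => F0 k l + F1 k l + F2 k l) = 0).
  { rewrite <- z2sum_zero. apply z2sum_ext. intros k l. unfold F0, F1, F2.
    rewrite <- !Rmult_plus_distr_l, Hg. ring. }
  rewrite !z2sum_plus in E3; auto. fold F0. lra. apply G2_plus; auto. Qed.

Lemma cont_of_der (f df : R -> R) x : (forall t, is_derive f t (df t)) -> continuity_pt f x.
Proof. intros H. apply derivable_continuous_pt. exists (df x). apply is_derive_Reals. auto. Qed.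

Lemma mvt (f df : R -> R) a b : (forall t, is_derive f t (df t)) ->
  exists c, Rmin a b <= c <= Rmax a b /\ f b - f a = df c * (b - a).
Proof. intros H. apply (MVT_gen f a b df). intros; auto. intros; apply (cont_of_der f df); auto. Qed.

Lemma between_abs a b c : Rmin a b <= c <= Rmax a b -> Rabs (c - a) <= Rabs (b - a).
Proof. unfold Rmin, Rmax. destruct (Rle_dec a b); intros [H1 H2]; 
  unfold Rabs; repeat destruct Rcase_abs; lra. Qed.

Lemma between_exp a b c : Rmin a b <= c <= Rmax a b -> exp (- c) <= Rmax (exp (- a)) (exp (- b)).
Proof. unfold Rmin. destruct (Rle_dec a b); intros [H1 H2].
  eapply Rle_trans. 2: apply Rmax_l. apply exp_le. lra.
  eapply Rle_trans. 2: apply Rmax_r. apply exp_le. lra. Qed.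

Lemma sq_abs x : x ^ 2 = Rabs x * Rabs x.
Proof. unfold Rabs; destruct Rcase_abs; ring. Qed.

Lemma exp_lip a b : Rabs (exp (- b) - exp (- a)) <= Rabs (b - a) * Rmax (exp (- a)) (exp (- b)).
Proof. destruct (mvt (fun t => exp (- t)) (fun t => - exp (- t)) a b) as [c [Hc E]].
  intro t. auto_derive; auto. ring.
  rewrite E, Rabs_mult, Rabs_Ropp, Rabs_pos_eq by (apply Rlt_le, exp_pos). rewrite Rmult_comm.
  apply Rmult_le_compat_l. apply Rabs_pos. apply between_exp; auto. Qed.

Lemma Rmax_mono a b c : Rmin a b <= c <= Rmax a b -> Rmax (exp (- a)) (exp (- c)) <= Rmax (exp (- a)) (exp (- b)).
Proof. intros H. apply Rmax_lub. apply Rmax_l. apply between_exp; auto. Qed.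

Lemma exp_rem a b : Rabs (exp (- b) - exp (- a) + exp (- a) * (b - a)) <= (b - a) ^ 2 * Rmax (exp (- a)) (exp (- b)).
Proof. destruct (mvt (fun t => exp (- t) + exp (- a) * t) (fun t => - exp (- t) + exp (- a)) a b) as [c [Hc E]].
  intro t. auto_derive; auto. ring.
  replace (exp (- b) - exp (- a) + exp (- a) * (b - a)) with (exp (- b) + exp (- a) * b - (exp (- a) + exp (- a) * a)) by ring.
  rewrite E, Rabs_mult. replace (- exp (- c) + exp (- a)) with (- (exp (- c) - exp (- a))) by ring. rewrite Rabs_Ropp.
  eapply Rle_trans. apply Rmult_le_compat_r. apply Rabs_pos. apply exp_lip.
  pose proof (between_abs _ _ _ Hc). pose proof (Rmax_mono _ _ _ Hc).
  assert (0 <= Rmax (exp (- a)) (exp (- c))) by (eapply Rle_trans; [apply Rlt_le, exp_pos| apply Rmax_l]).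
  rewrite (sq_abs (b - a)).
  pose proof (Rabs_pos (c - a)). pose proof (Rabs_pos (b - a)).
  apply Rle_trans with (Rabs (b - a) * Rmax (exp (- a)) (exp (- b)) * Rabs (b - a)).
  apply Rmult_le_compat; try nra. right; ring. Qed.

Lemma sin_lip a b : Rabs (sin b - sin a) <= Rabs (b - a).
Proof. destruct (mvt sin cos a b) as [c [Hc E]]. intro t. auto_derive; auto. ring.
  rewrite E, Rabs_mult. pose proof (COS_bound c). assert (Rabs (cos c) <= 1) by (apply Rabs_le; lra).
  pose proof (Rabs_pos (b - a)). nra. Qed.

Lemma cos_lip a b : Rabs (cos b - cos a) <= Rabs (b - a).
Proof. destruct (mvt cos (fun t => - sin t) a b) as [c [Hc E]]. intro t. auto_derive; auto. ring.
  rewrite E, Rabs_mult. pose proof (SIN_bound c). assert (Rabs (- sin c) <= 1) by (rewrite Rabs_Ropp; apply Rabs_le; lra).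
  pose proof (Rabs_pos (b - a)). nra. Qed.

Lemma cos_rem a b : Rabs (cos b - cos a + sin a * (b - a)) <= (b - a) ^ 2.
Proof. destruct (mvt (fun t => cos t + sin a * t) (fun t => - sin t + sin a) a b) as [c [Hc E]].
  intro t. auto_derive; auto. ring.
  replace (cos b - cos a + sin a * (b - a)) with (cos b + sin a * b - (cos a + sin a * a)) by ring.
  rewrite E, Rabs_mult. replace (- sin c + sin a) with (- (sin c - sin a)) by ring. rewrite Rabs_Ropp.
  pose proof (sin_lip a c). pose proof (between_abs _ _ _ Hc). pose proof (Rabs_pos (b - a)).
  pose proof (Rabs_pos (sin c - sin a)).
  rewrite (sq_abs (b - a)).
  apply Rmult_le_compat; nra. Qed.

Definition nrm (k l : Z) : R := IZR k ^ 2 + IZR l ^ 2.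
Lemma nrm_ge0 k l : 0 <= nrm k l.
Proof. unfold nrm. pose proof (pow2_ge_0 (IZR k)). pose proof (pow2_ge_0 (IZR l)). lra. Qed.

Lemma gs_prod e k l : gs e k * gs e l = exp (- e * nrm k l).
Proof. unfold gs, nrm. rewrite <- exp_plus. f_equal. ring. Qed.

Definition Md (p : Z -> Z -> R) : Prop :=
  forall d, 0 < d -> exists C, 0 <= C /\ forall k l, Rabs (p k l) <= C * exp (d * nrm k l).

Lemma Md_le p q : Md q -> (forall k l, Rabs (p k l) <= Rabs (q k l)) -> Md p.
Proof. intros Hq H d Hd. destruct (Hq d Hd) as [C [HC HH]]. exists C. split; auto. intros k l. eapply Rle_trans; eauto. Qed.

Lemma Md_const c : Md (fun _ _ => c).
Proof. intros d Hd. exists (Rabs c). split. apply Rabs_pos. intros k l.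
  pose proof (nrm_ge0 k l). assert (1 <= exp (d * nrm k l)) by (rewrite <- exp_0; apply exp_le; nra).
  pose proof (Rabs_pos c). nra. Qed.

Lemma Md_plus p q : Md p -> Md q -> Md (fun k l => p k l + q k l).
Proof. intros Hp Hq d Hd. destruct (Hp d Hd) as [C1 [H1 HH1]]. destruct (Hq d Hd) as [C2 [H2 HH2]].
  exists (C1 + C2). split. lra. intros k l. eapply Rle_trans. apply Rabs_triang.
  specialize (HH1 k l). specialize (HH2 k l). lra. Qed.

Lemma Md_mult p q : Md p -> Md q -> Md (fun k l => p k l * q k l).
Proof. intros Hp Hq d Hd. destruct (Hp (d/2)) as [C1 [H1 HH1]]. lra. destruct (Hq (d/2)) as [C2 [H2 HH2]]. lra.
  exists (C1 * C2). split. nra. intros k l. rewrite Rabs_mult.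
  replace (d * nrm k l) with (d / 2 * nrm k l + d / 2 * nrm k l) by field. rewrite exp_plus.
  specialize (HH1 k l). specialize (HH2 k l). pose proof (Rabs_pos (p k l)). pose proof (Rabs_pos (q k l)).
  apply Rle_trans with ((C1 * exp (d / 2 * nrm k l)) * (C2 * exp (d / 2 * nrm k l))).
  apply Rmult_le_compat; auto. right; ring. Qed.

Lemma Md_abs p : Md p -> Md (fun k l => Rabs (p k l)).
Proof. intros Hp. apply (Md_le _ p Hp). intros. rewrite Rabs_Rabsolu. lra. Qed.

Lemma absle_exp x d : 0 < d -> Rabs x <= (1 + / d) * exp (d * x ^ 2).
Proof. intros Hd. eapply Rle_trans with (1 + x ^ 2).
  unfold Rabs; destruct Rcase_abs; nra.
  eapply Rle_trans with ((1 + / d) * (1 + d * x ^ 2)).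
  assert (0 < / d) by (apply Rinv_0_lt_compat; auto).
  replace ((1 + / d) * (1 + d * x ^ 2)) with (1 + d * x^2 + / d + x ^ 2) by (field; lra).
  pose proof (pow2_ge_0 x). nra.
  apply Rmult_le_compat_l. assert (0 < / d) by (apply Rinv_0_lt_compat; auto). lra. apply exp_ineq1_le. Qed.

Lemma Md_K : Md (fun k l => IZR k).
Proof. intros d Hd. exists (1 + / d). split. assert (0 < / d) by (apply Rinv_0_lt_compat; auto). lra.
  intros k l. eapply Rle_trans. apply (absle_exp _ d Hd). apply Rmult_le_compat_l.
  assert (0 < / d) by (apply Rinv_0_lt_compat; auto). lra. apply exp_le. unfold nrm.
  pose proof (pow2_ge_0 (IZR l)). nra. Qed.

Lemma Md_L : Md (fun k l => IZR l).
Proof. intros d Hd. exists (1 + / d). split. assert (0 < / d) by (apply Rinv_0_lt_compat; auto). lra.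
  intros k l. eapply Rle_trans. apply (absle_exp _ d Hd). apply Rmult_le_compat_l.
  assert (0 < / d) by (apply Rinv_0_lt_compat; auto). lra. apply exp_le. unfold nrm.
  pose proof (pow2_ge_0 (IZR k)). nra. Qed.

Lemma G2_exp f : G2 f <-> exists e M, 0 < e /\ forall k l, Rabs (f k l) <= M * exp (- e * nrm k l).
Proof. split; intros [e [M [He H]]]; exists e, M; split; auto; intros k l.
  rewrite <- gs_prod; auto. rewrite gs_prod; auto. Qed.

Lemma G2_mul f p : G2 f -> Md p -> G2 (fun k l => f k l * p k l).
Proof. intros Hf Hp. destruct (G2_M f Hf) as [e [M [He [HM H]]]]. destruct (Hp (e/2)) as [C [HC HH]]. lra.
  apply G2_exp. exists (e/2), (M * C). split. lra. intros k l. rewrite Rabs_mult.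
  specialize (H k l). rewrite gs_prod in H. specialize (HH k l).
  pose proof (Rabs_pos (f k l)). pose proof (Rabs_pos (p k l)).
  apply Rle_trans with ((M * exp (- e * nrm k l)) * (C * exp (e / 2 * nrm k l))).
  apply Rmult_le_compat; auto. replace (M * exp (- e * nrm k l) * (C * exp (e / 2 * nrm k l))) with
   (M * C * (exp (- e * nrm k l) * exp (e / 2 * nrm k l))) by ring. rewrite <- exp_plus. right. f_equal. f_equal. field. Qed.

Lemma G2_expQ (f Q : Z -> Z -> R) e C0 : 0 < e -> (forall k l, Rabs (f k l) <= exp (- Q k l)) ->
  (forall k l, e * nrm k l - C0 <= Q k l) -> G2 f.
Proof. intros He H1 H2. apply G2_exp. exists e, (exp C0). split; auto. intros k l. eapply Rle_trans. apply H1.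
  rewrite <- exp_plus. apply exp_le. specialize (H2 k l). lra. Qed.

Lemma z2sum_lin f0 f1 d1 d2 a b : G2 f0 -> G2 f1 -> G2 d1 -> G2 d2 ->
  z2sum (fun k l => f1 k l - f0 k l - a * d1 k l - b * d2 k l) = z2sum f1 - z2sum f0 - a * z2sum d1 - b * z2sum d2.
Proof. intros H0 H1 H2 H3.
  rewrite (z2sum_ext _ (fun k l => (f1 k l + (-1) * f0 k l) + (- a) * d1 k l + (- b) * d2 k l)) by (intros; ring).
  assert (G1 : G2 (fun k l => f1 k l + (-1) * f0 k l)) by (apply G2_plus; auto; apply G2_scal; auto).
  assert (G3 : G2 (fun k l => (f1 k l + (-1) * f0 k l) + (- a) * d1 k l)) by (apply G2_plus; auto; apply G2_scal; auto).
  rewrite (z2sum_plus _ _ G3) by (apply G2_scal; auto).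
  rewrite (z2sum_plus _ _ G1) by (apply G2_scal; auto).
  rewrite (z2sum_plus _ _ H1) by (apply G2_scal; auto).
  rewrite !z2sum_scal. ring. Qed.

Lemma key (e : R -> R -> Z -> Z -> R) (p0 q0 r : R) (s : R -> R) (Dp Dq Mb : Z -> Z -> R) :
  0 < r -> s p0 = q0 -> is_derive s p0 0 ->
  (forall p q, Rabs (p - p0) <= r -> Rabs (q - q0) <= r -> G2 (e p q)) ->
  G2 Dp -> G2 Dq -> G2 Mb ->
  (forall p q k l, Rabs (p - p0) <= r -> Rabs (q - q0) <= r ->
     Rabs (e p q k l - e p0 q0 k l - (p - p0) * Dp k l - (q - q0) * Dq k l) <= Mb k l * ((p - p0) ^ 2 + (q - q0) ^ 2)) ->
  z2sum Dp = 0 ->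
  is_derive (fun p => z2sum (e p (s p))) p0 0.
Proof. intros Hr Hs0 Hsd He HDp HDq HMb Hrem HZ.
  apply is_derive_Reals in Hsd. apply is_derive_Reals. intros eps Heps.
  set (Zm := Rabs (z2sum Mb)). set (Kq := Rabs (z2sum Dq)).
  assert (HZm : 0 <= Zm) by apply Rabs_pos.
  assert (HKq : 0 <= Kq) by apply Rabs_pos.
  set (eta := Rmin 1 (eps / (2 * (Kq + 1)))).
  assert (Heta : 0 < eta). { unfold eta. apply Rmin_glb_lt. lra. apply Rdiv_lt_0_compat; lra. }
  assert (Heta1 : eta <= 1) by apply Rmin_l.
  assert (Heta2 : eta * Kq <= eps / 2).
  { apply Rle_trans with (eps / (2 * (Kq + 1)) * Kq). apply Rmult_le_compat_r; auto. apply Rmin_r.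
    apply Rle_trans with (eps / (2 * (Kq + 1)) * (Kq + 1)). apply Rmult_le_compat_l. apply Rlt_le, Rdiv_lt_0_compat; lra. lra.
    right. field. lra. }
  destruct (Hsd eta Heta) as [ds Hds].
  set (dd := Rmin (Rmin ds r) (eps / (4 * (Zm + 1)))).
  assert (Hdd : 0 < dd). { unfold dd. apply Rmin_glb_lt. apply Rmin_glb_lt. apply cond_pos. auto. apply Rdiv_lt_0_compat; lra. }
  exists (mkposreal dd Hdd). intros h Hh0 Hh. simpl in Hh.
  assert (Hh1 : Rabs h < ds) by (eapply Rlt_le_trans; [exact Hh | unfold dd; eapply Rle_trans; [apply Rmin_l | apply Rmin_l]]).
  assert (Hh2 : Rabs h < r) by (eapply Rlt_le_trans; [exact Hh | unfold dd; eapply Rle_trans; [apply Rmin_l | apply Rmin_r]]).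
  assert (Hh3 : Rabs h <= eps / (4 * (Zm + 1))) by (left; eapply Rlt_le_trans; [exact Hh | unfold dd; apply Rmin_r]).
  specialize (Hds h Hh0 Hh1). rewrite Hs0, Rminus_0_r in Hds.
  set (dq := s (p0 + h) - q0).
  assert (Hdq : Rabs dq <= eta * Rabs h).
  { unfold dq. replace (s (p0 + h) - q0) with ((s (p0 + h) - q0) / h * h) by (field; auto).
    rewrite Rabs_mult. apply Rmult_le_compat_r. apply Rabs_pos. lra. }
  assert (Hhpos : 0 < Rabs h) by (apply Rabs_pos_lt; auto).
  assert (Hdqr : Rabs dq <= r) by nra.
  assert (Hdq' : s (p0 + h) = q0 + dq) by (unfold dq; ring).
  assert (Hp : Rabs (p0 + h - p0) <= r) by (replace (p0 + h - p0) with h by ring; lra).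
  assert (Hq : Rabs (s (p0 + h) - q0) <= r) by (fold dq; auto).
  assert (Hp0 : Rabs (p0 - p0) <= r) by (rewrite Rminus_diag_eq, Rabs_R0; lra).
  assert (Hq0 : Rabs (q0 - q0) <= r) by (rewrite Rminus_diag_eq, Rabs_R0; lra).
  pose proof (z2sum_lin (e p0 q0) (e (p0 + h) (s (p0 + h))) Dp Dq (p0 + h - p0) (s (p0 + h) - q0)
     (He _ _ Hp0 Hq0) (He _ _ Hp Hq) HDp HDq) as L.
  rewrite HZ, <- Hs0 in L. rewrite Hs0 in L.
  assert (B : Rabs (z2sum (fun k l => e (p0 + h) (s (p0 + h)) k l - e p0 q0 k l - (p0 + h - p0) * Dp k l - (s (p0 + h) - q0) * Dq k l))
     <= Zm * (h ^ 2 + dq ^ 2)).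
  { eapply Rle_trans. apply (z2sum_abs_le _ (fun k l => Mb k l * ((p0 + h - p0) ^ 2 + (s (p0 + h) - q0) ^ 2))).
    apply (G2_le _ (fun k l => ((p0 + h - p0) ^ 2 + (s (p0 + h) - q0) ^ 2) * Mb k l)). apply G2_scal; auto.
    intros; rewrite Rmult_comm; lra. intros k l. apply Hrem; auto.
    rewrite (z2sum_ext _ (fun k l => ((p0 + h - p0) ^ 2 + (s (p0 + h) - q0) ^ 2) * Mb k l)) by (intros; ring).
    rewrite z2sum_scal. fold dq. replace (p0 + h - p0) with h by ring. rewrite Rmult_comm.
    apply Rmult_le_compat_r. pose proof (pow2_ge_0 h); pose proof (pow2_ge_0 dq); lra. apply Rle_abs. }
  rewrite L in B. fold dq in B. replace (p0 + h - p0) with h in B by ring.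
  assert (E1 : Rabs (z2sum (e (p0 + h) (s (p0 + h))) - z2sum (e p0 q0)) <= Zm * (h ^ 2 + dq ^ 2) + Rabs dq * Kq).
  { replace (z2sum (e (p0 + h) (s (p0 + h))) - z2sum (e p0 q0)) with
      ((z2sum (e (p0 + h) (s (p0 + h))) - z2sum (e p0 q0) - h * 0 - dq * z2sum Dq) + dq * z2sum Dq) by ring.
    eapply Rle_trans. apply Rabs_triang. rewrite Rabs_mult. unfold Kq. lra. }
  rewrite Hs0, Rminus_0_r. unfold Rdiv. rewrite Rabs_mult, Rabs_inv.
  apply Rle_lt_trans with ((Zm * (h ^ 2 + dq ^ 2) + Rabs dq * Kq) * / Rabs h).
  apply Rmult_le_compat_r. left; apply Rinv_0_lt_compat; auto. auto.
  assert (Hdq2 : dq ^ 2 <= h ^ 2).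
  { rewrite (sq_abs dq), (sq_abs h). assert (Rabs dq <= Rabs h) by nra. pose proof (Rabs_pos dq). nra. }
  apply Rle_lt_trans with (2 * Zm * Rabs h + eta * Kq).
  { rewrite Rmult_plus_distr_r. apply Rplus_le_compat.
    - apply Rle_trans with (Zm * (2 * h ^ 2) * / Rabs h). apply Rmult_le_compat_r. left; apply Rinv_0_lt_compat; auto.
      apply Rmult_le_compat_l; auto. lra. rewrite (sq_abs h). right. field. lra.
    - apply Rle_trans with (eta * Rabs h * Kq * / Rabs h). apply Rmult_le_compat_r. left; apply Rinv_0_lt_compat; auto.
      apply Rmult_le_compat_r; auto. right. field. lra. }
  assert (2 * Zm * Rabs h <= eps / 2 * (Zm / (Zm + 1))).
  { apply Rle_trans with (2 * Zm * (eps / (4 * (Zm + 1)))). apply Rmult_le_compat_l; lra. right. field. lra. }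
  assert (Zm / (Zm + 1) < 1). { apply (Rmult_lt_reg_r (Zm + 1)). lra. unfold Rdiv. rewrite Rmult_assoc, Rinv_l by lra. lra. }
  nra. Qed.

Lemma IZR_nat_nonneg n : (0 <= n)%Z -> IZR n = INR (Z.to_nat n).
Proof. intros H. rewrite INR_IZR_INZ, Z2Nat.id; auto. Qed.

Lemma cosZ x n : cos (x + 2 * PI * IZR n) = cos x.
Proof. destruct (Z_le_gt_dec 0 n) as [Hn|Hn].
  - rewrite (IZR_nat_nonneg n) by auto. rewrite <- (cos_period x (Z.to_nat n)). apply f_equal; ring.
  - set (x' := x + 2 * PI * IZR n). replace x with (x' + 2 * INR (Z.to_nat (- n)) * PI).
    rewrite cos_period. auto. unfold x'. rewrite <- (IZR_nat_nonneg (- n)) by lia. rewrite opp_IZR. ring. Qed.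

Lemma sinZ x n : sin (x + 2 * PI * IZR n) = sin x.
Proof. destruct (Z_le_gt_dec 0 n) as [Hn|Hn].
  - rewrite (IZR_nat_nonneg n) by auto. rewrite <- (sin_period x (Z.to_nat n)). apply f_equal; ring.
  - set (x' := x + 2 * PI * IZR n). replace x with (x' + 2 * INR (Z.to_nat (- n)) * PI).
    rewrite sin_period. auto. unfold x'. rewrite <- (IZR_nat_nonneg (- n)) by lia. rewrite opp_IZR. ring. Qed.

Lemma abs_le_inv x a : Rabs x <= a -> - a <= x <= a.
Proof. unfold Rabs; destruct Rcase_abs; intros; lra. Qed.

Lemma LB (K L x s c Y : R) : Rabs x <= 3/2 -> Rabs s <= 2 -> Rabs c <= 1 -> 1/4 <= Y ->
  (K ^ 2 + L ^ 2) / 62 - 2 <= (K + x * L + c) ^ 2 + Y * (L + s) ^ 2.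
Proof. intros Hx Hs Hc HY. set (a := K + x * L + c). set (b := L + s).
  assert (HK : K = a - x * L - c) by (unfold a; ring). assert (HL : L = b - s) by (unfold b; ring).
  apply abs_le_inv in Hx. apply abs_le_inv in Hs. apply abs_le_inv in Hc.
  assert (E1 : L ^ 2 <= 2 * b ^ 2 + 8).
  { rewrite HL. pose proof (pow2_ge_0 (b + s)). nra. }
  assert (E2 : K ^ 2 <= 3 * a ^ 2 + 3 * x ^ 2 * L ^ 2 + 3).
  { rewrite HK. pose proof (pow2_ge_0 (a + x * L)). pose proof (pow2_ge_0 (a + c)). pose proof (pow2_ge_0 (x * L - c)). nra. }
  assert (E3 : x ^ 2 <= 9 / 4) by nra.
  assert (E4 : x ^ 2 * L ^ 2 <= 9/4 * L ^ 2) by (pose proof (pow2_ge_0 L); nra).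
  assert (E5 : b ^ 2 <= 4 * Y * b ^ 2) by (pose proof (pow2_ge_0 b); nra).
  pose proof (pow2_ge_0 a). nra. Qed.

Lemma LB2 (K L x y : R) : 0 < y ->
  (K ^ 2 + L ^ 2) / (2 + (2 * x ^ 2 + 1) / y ^ 2) <= (K + x * L) ^ 2 + y ^ 2 * L ^ 2.
Proof. intros Hy. assert (Hy2 : 0 < y ^ 2) by nra. set (m := 2 + (2 * x ^ 2 + 1) / y ^ 2).
  assert (Hm : 0 < m). { unfold m. assert (0 <= (2 * x ^ 2 + 1) / y ^ 2). apply Rle_div_r; auto; nra. lra. }
  apply (Rmult_le_reg_l m); auto. unfold Rdiv. rewrite <- Rmult_assoc, (Rmult_comm m), Rmult_assoc, Rinv_r, Rmult_1_r by lra.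
  assert (K ^ 2 <= 2 * (K + x * L) ^ 2 + 2 * x ^ 2 * L ^ 2) by (pose proof (pow2_ge_0 (K + 2 * x * L)); nra).
  unfold m. replace ((2 + (2 * x ^ 2 + 1) / y ^ 2) * ((K + x * L) ^ 2 + y ^ 2 * L ^ 2)) with
    (2 * (K + x * L) ^ 2 + 2 * y ^ 2 * L ^ 2 + (2 * x ^ 2 + 1) / y ^ 2 * (K + x * L) ^ 2 + (2 * x ^ 2 + 1) * L ^ 2) by (field; lra).
  assert (0 <= (2 * x ^ 2 + 1) / y ^ 2 * (K + x * L) ^ 2). { apply Rmult_le_pos. apply Rle_div_r; auto; nra. apply pow2_ge_0. }
  pose proof (pow2_ge_0 L). nra. Qed.

Lemma gen_exp (Q Q0 Q1 P P' h B : R) : 0 <= h ->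
  Rabs (Q - Q0) <= P * h -> Rabs (Q - Q0 - Q1) <= P' * h ^ 2 ->
  exp (- Q) <= B -> exp (- Q0) <= B ->
  Rabs (exp (- Q) - exp (- Q0) + exp (- Q0) * Q1) <= (P ^ 2 + P') * h ^ 2 * B.
Proof. intros Hh H1 H2 H3 H4.
  replace (exp (- Q) - exp (- Q0) + exp (- Q0) * Q1) with
    ((exp (- Q) - exp (- Q0) + exp (- Q0) * (Q - Q0)) - exp (- Q0) * (Q - Q0 - Q1)) by ring.
  eapply Rle_trans. apply Rabs_triang_inv2 || apply Rabs_triang.
  rewrite Rabs_Ropp || idtac.
  pose proof (exp_rem Q0 Q) as R1. rewrite Rabs_mult, (Rabs_pos_eq (exp (- Q0))) by (apply Rlt_le, exp_pos).
  assert (Hm : Rmax (exp (- Q0)) (exp (- Q)) <= B) by (apply Rmax_lub; auto).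
  assert (Hsq : (Q - Q0) ^ 2 <= (P * h) ^ 2).
  { rewrite (sq_abs (Q - Q0)). pose proof (Rabs_pos (Q - Q0)). replace ((P * h) ^ 2) with ((P * h) * (P * h)) by ring.
    apply Rmult_le_compat; auto. }
  pose proof (exp_pos (- Q0)). pose proof (pow2_ge_0 (Q - Q0)). pose proof (Rabs_pos (Q - Q0 - Q1)).
  assert (0 <= Rmax (exp (- Q0)) (exp (- Q))) by (eapply Rle_trans; [apply Rlt_le, exp_pos | apply Rmax_l]).
  assert (A1 : (Q - Q0) ^ 2 * Rmax (exp (- Q0)) (exp (- Q)) <= P ^ 2 * h ^ 2 * B).
  { apply Rle_trans with ((P * h) ^ 2 * B). apply Rmult_le_compat; auto. right; ring. }
  assert (A2 : exp (- Q0) * Rabs (Q - Q0 - Q1) <= P' * h ^ 2 * B).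
  { assert (0 <= B) by (pose proof (exp_pos (- Q0)); lra).
    apply Rle_trans with (B * Rabs (Q - Q0 - Q1)). apply Rmult_le_compat_r; lra.
    apply Rle_trans with (B * (P' * h ^ 2)). apply Rmult_le_compat_l; auto. right; ring. }
  lra. Qed.

Lemma gen_expcos (Q Q0 Q1 P P' F F0 F1 R R' h B : R) : 0 <= h ->
  Rabs (Q - Q0) <= P * h -> Rabs (Q - Q0 - Q1) <= P' * h ^ 2 ->
  Rabs (F - F0) <= R * h -> Rabs (F - F0 - F1) <= R' * h ^ 2 ->
  exp (- Q) <= B -> exp (- Q0) <= B ->
  Rabs (exp (- Q) * cos F - exp (- Q0) * cos F0 - (- exp (- Q0) * Q1 * cos F0 - exp (- Q0) * sin F0 * F1))
   <= (P ^ 2 + P' + R ^ 2 + R' + P * R) * h ^ 2 * B.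
Proof. intros Hh H1 H2 H3 H4 H5 H6.
  pose proof (gen_exp Q Q0 Q1 P P' h B Hh H1 H2 H5 H6) as GE.
  set (A := exp (- Q)) in *. set (A0 := exp (- Q0)) in *.
  replace (A * cos F - A0 * cos F0 - (- A0 * Q1 * cos F0 - A0 * sin F0 * F1)) with
    (A0 * (cos F - cos F0 + sin F0 * F1) + cos F0 * (A - A0 + A0 * Q1) + (A - A0) * (cos F - cos F0)) by ring.
  assert (HA0 : 0 < A0) by apply exp_pos. assert (HB : 0 <= B) by lra.
  assert (T1 : Rabs (cos F - cos F0 + sin F0 * F1) <= R ^ 2 * h ^ 2 + R' * h ^ 2).
  { replace (cos F - cos F0 + sin F0 * F1) with ((cos F - cos F0 + sin F0 * (F - F0)) - sin F0 * (F - F0 - F1)) by ring.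
    eapply Rle_trans. apply Rabs_triang. rewrite Rabs_Ropp, Rabs_mult. pose proof (cos_rem F0 F).
    assert (Rabs (sin F0) <= 1) by (apply Rabs_le; apply SIN_bound).
    assert ((F - F0) ^ 2 <= R ^ 2 * h ^ 2).
    { rewrite (sq_abs (F - F0)). pose proof (Rabs_pos (F - F0)). replace (R ^ 2 * h ^ 2) with ((R * h) * (R * h)) by ring.
      apply Rmult_le_compat; auto. }
    pose proof (Rabs_pos (sin F0)). pose proof (Rabs_pos (F - F0 - F1)).
    assert (Rabs (sin F0) * Rabs (F - F0 - F1) <= 1 * (R' * h ^ 2)) by (apply Rmult_le_compat; auto).
    lra. }
  assert (T2 : Rabs (A - A0) <= P * h * B).
  { pose proof (exp_lip Q0 Q). fold A A0 in H. eapply Rle_trans. apply H.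
    assert (Rmax A0 A <= B) by (apply Rmax_lub; auto). pose proof (Rabs_pos (Q - Q0)).
    apply Rmult_le_compat; auto. eapply Rle_trans. apply Rlt_le, HA0. apply Rmax_l. }
  assert (T3 : Rabs (cos F - cos F0) <= R * h) by (eapply Rle_trans; [apply cos_lip | auto]).
  eapply Rle_trans. apply Rabs_triang. eapply Rle_trans. apply Rplus_le_compat_r. apply Rabs_triang.
  rewrite !Rabs_mult. rewrite (Rabs_pos_eq A0) by lra.
  assert (Rabs (cos F0) <= 1) by (apply Rabs_le; apply COS_bound).
  pose proof (Rabs_pos (cos F - cos F0 + sin F0 * F1)). pose proof (Rabs_pos (A - A0 + A0 * Q1)).
  pose proof (Rabs_pos (A - A0)). pose proof (Rabs_pos (cos F - cos F0)). pose proof (Rabs_pos (cos F0)).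
  assert (X1 : A0 * Rabs (cos F - cos F0 + sin F0 * F1) <= B * (R ^ 2 * h ^ 2 + R' * h ^ 2)) by (apply Rmult_le_compat; lra).
  assert (X2 : Rabs (cos F0) * Rabs (A - A0 + A0 * Q1) <= 1 * ((P ^ 2 + P') * h ^ 2 * B)) by (apply Rmult_le_compat; lra).
  assert (X3 : Rabs (A - A0) * Rabs (cos F - cos F0) <= (P * h * B) * (R * h)) by (apply Rmult_le_compat; lra).
  nra. Qed.

Section Y.
Variable y0 : R.
Hypothesis Hy0 : 0 < y0.
Hypothesis Hy02 : y0 ^ 2 = 3 / 4.

Lemma y0_bnd : 43 / 50 < y0 < 87 / 100.
Proof. split; nra. Qed.

Lemma y_bnd y : Rabs (y - y0) <= 1 / 4 -> 3 / 5 <= y <= 6 / 5.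
Proof. intros H. apply abs_le_inv in H. pose proof y0_bnd. lra. Qed.

Lemma abs_mul_bound (d G C : R) : Rabs G <= C -> Rabs (d * G) <= C * Rabs d.
Proof. intros H. rewrite Rabs_mult, Rmult_comm. apply Rmult_le_compat_r. apply Rabs_pos. auto. Qed.
Lemma abs_mul_bound2 (d G C : R) : Rabs G <= C -> Rabs (d ^ 2 * G) <= C * d ^ 2.
Proof. intros H. rewrite Rabs_mult, Rmult_comm, (Rabs_pos_eq (d ^ 2)) by apply pow2_ge_0.
  apply Rmult_le_compat_r. apply pow2_ge_0. auto. Qed.

Lemma inv_facts y : Rabs (y - y0) <= 1 / 4 -> 0 < / y <= 5 / 3 /\ 0 < / y0 <= 50 / 43.
Proof. intros H. destruct (y_bnd y H). pose proof y0_bnd. split; split.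
  apply Rinv_0_lt_compat; lra. apply (Rmult_le_reg_l y); [lra|]. rewrite Rinv_r by lra. lra.
  apply Rinv_0_lt_compat; lra. apply (Rmult_le_reg_l y0); [lra|]. rewrite Rinv_r by lra. lra. Qed.

Lemma f1_bnd y : Rabs (y - y0) <= 1 / 4 ->
  Rabs (/ y - / y0) <= 10 * Rabs (y - y0) /\ Rabs (/ y - / y0 - (- / y0 ^ 2) * (y - y0)) <= 10 * (y - y0) ^ 2.
Proof. intros H. destruct (y_bnd y H). destruct (inv_facts y H) as [[U1 U2] [V1 V2]].
  split.
  - replace (/ y - / y0) with ((y - y0) * (- ((/ y) * (/ y0)))) by (field; lra).
    set (u := / y) in *. set (u0 := / y0) in *.
    apply abs_mul_bound. rewrite Rabs_Ropp, Rabs_pos_eq by nra. nra.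
  - replace (/ y - / y0 - - / y0 ^ 2 * (y - y0)) with ((y - y0) ^ 2 * ((/ y) * (/ y0) ^ 2)) by (field; lra).
    set (u := / y) in *. set (u0 := / y0) in *.
    apply abs_mul_bound2. rewrite Rabs_pos_eq by nra. nra. Qed.

Lemma f2_bnd y : Rabs (y - y0) <= 1 / 4 ->
  Rabs (/ y ^ 2 - / y0 ^ 2) <= 10 * Rabs (y - y0) /\
  Rabs (/ y ^ 2 - / y0 ^ 2 - (- 2 / y0 ^ 3) * (y - y0)) <= 30 * (y - y0) ^ 2.
Proof. intros H. destruct (y_bnd y H). destruct (inv_facts y H) as [[U1 U2] [V1 V2]]. pose proof y0_bnd.
  split.
  - replace (/ y ^ 2 - / y0 ^ 2) with ((y - y0) * (- ((y + y0) * (/ y) ^ 2 * (/ y0) ^ 2))) by (field; lra).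
    set (u := / y) in *. set (u0 := / y0) in *.
    apply abs_mul_bound. rewrite Rabs_Ropp, Rabs_pos_eq.
    assert (u ^ 2 <= 25/9) by nra. assert (u0 ^ 2 <= 2500/1849) by nra. 
    assert (u ^ 2 * u0 ^ 2 <= 25/9 * (2500/1849)) by (apply Rmult_le_compat; nra). nra.
    apply Rmult_le_pos. apply Rmult_le_pos. lra. nra. nra.
  - replace (/ y ^ 2 - / y0 ^ 2 - - 2 / y0 ^ 3 * (y - y0)) with ((y - y0) ^ 2 * ((2 * y + y0) * (/ y) ^ 2 * (/ y0) ^ 3)) by (field; lra).
    set (u := / y) in *. set (u0 := / y0) in *.
    apply abs_mul_bound2. rewrite Rabs_pos_eq.
    assert (u ^ 2 <= 25/9) by nra. assert (u0 ^ 3 <= 125000/79507) by (simpl; assert (u0 * u0 <= 2500/1849) by nra; nra).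
    assert (u ^ 2 * u0 ^ 3 <= 25/9 * (125000/79507)) by (apply Rmult_le_compat; try nra; simpl; nra). nra.
    apply Rmult_le_pos. apply Rmult_le_pos. lra. nra. simpl; nra. Qed.

Lemma f3_bnd y : Rabs (y - y0) <= 1 / 4 ->
  Rabs (/ y ^ 3 - / y0 ^ 3) <= 30 * Rabs (y - y0) /\
  Rabs (/ y ^ 3 - / y0 ^ 3 - (- 3 / y0 ^ 4) * (y - y0)) <= 100 * (y - y0) ^ 2.
Proof. intros H. destruct (y_bnd y H). destruct (inv_facts y H) as [[U1 U2] [V1 V2]]. pose proof y0_bnd.
  assert (Hu3 : (/ y) ^ 3 <= 125/27) by (simpl; assert (/ y * / y <= 25/9) by nra; nra).
  assert (Hu03 : (/ y0) ^ 3 <= 125000/79507) by (simpl; assert (/ y0 * / y0 <= 2500/1849) by nra; nra).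
  assert (Hu04 : (/ y0) ^ 4 <= (2500/1849)^2) by (assert ((/ y0)^2 <= 2500/1849) by nra; replace ((/ y0)^4) with ((/ y0)^2*(/ y0)^2) by ring; nra).
  assert (P3 : 0 < (/ y) ^ 3) by (apply pow_lt; lra). assert (P03 : 0 < (/ y0) ^ 3) by (apply pow_lt; lra). assert (P04 : 0 < (/ y0) ^ 4) by (apply pow_lt; lra).
  split.
  - replace (/ y ^ 3 - / y0 ^ 3) with ((y - y0) * (- ((y ^ 2 + y * y0 + y0 ^ 2) * (/ y) ^ 3 * (/ y0) ^ 3))) by (field; lra).
    set (u := / y) in *. set (u0 := / y0) in *.
    apply abs_mul_bound. rewrite Rabs_Ropp, Rabs_pos_eq by (apply Rmult_le_pos; [apply Rmult_le_pos|]; nra).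
    assert (W : u ^ 3 * u0 ^ 3 <= 125/27 * (125000/79507)) by (apply Rmult_le_compat; lra).
    assert (Hs : y ^ 2 + y * y0 + y0 ^ 2 <= 33/10) by nra. rewrite Rmult_assoc.
    apply Rle_trans with (33/10 * (125/27 * (125000/79507))). apply Rmult_le_compat; try nra. lra.
  - replace (/ y ^ 3 - / y0 ^ 3 - - 3 / y0 ^ 4 * (y - y0)) with ((y - y0) ^ 2 * ((3 * y ^ 2 + 2 * y * y0 + y0 ^ 2) * (/ y) ^ 3 * (/ y0) ^ 4)) by (field; lra).
    set (u := / y) in *. set (u0 := / y0) in *.
    apply abs_mul_bound2. rewrite Rabs_pos_eq by (apply Rmult_le_pos; [apply Rmult_le_pos|]; nra).
    assert (W : u ^ 3 * u0 ^ 4 <= 125/27 * (2500/1849)^2) by (apply Rmult_le_compat; lra).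
    assert (Hs : 3 * y ^ 2 + 2 * y * y0 + y0 ^ 2 <= 72/10) by nra. rewrite Rmult_assoc.
    apply Rle_trans with (72/10 * (125/27 * (2500/1849)^2)). apply Rmult_le_compat; try nra. lra. Qed.

End Y.


Lemma Md_opp p : Md p -> Md (fun k l => - p k l).
Proof. intros H. apply (Md_le _ p H). intros. rewrite Rabs_Ropp. lra. Qed.
Lemma Md_minus p q : Md p -> Md q -> Md (fun k l => p k l - q k l).
Proof. intros H1 H2. apply (Md_plus p (fun k l => - q k l)); auto. apply Md_opp; auto. Qed.
Lemma Md_pow2 p : Md p -> Md (fun k l => p k l ^ 2).
Proof. intros H. apply (Md_le _ (fun k l => p k l * p k l)). apply Md_mult; auto. intros; right; f_equal; ring. Qed.
Lemma Md_div p c : Md p -> Md (fun k l => p k l / c).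
Proof. intros H. apply (Md_le _ (fun k l => p k l * / c)). apply Md_mult; auto. apply Md_const. intros; right; f_equal. Qed.

Ltac md := repeat first [ apply Md_const | apply Md_plus | apply Md_minus | apply Md_mult | apply Md_opp
   | apply Md_pow2 | apply Md_abs | apply Md_div | apply Md_K | apply Md_L ].

Lemma h_sq dx ds : (Rabs dx + Rabs ds) ^ 2 <= 2 * (dx ^ 2 + ds ^ 2).
Proof. rewrite (sq_abs dx), (sq_abs ds). pose proof (pow2_ge_0 (Rabs dx - Rabs ds)). nra. Qed.

Lemma sq_le_abs d : Rabs d <= 1 -> d ^ 2 <= Rabs d.
Proof. intros H. rewrite sq_abs. pose proof (Rabs_pos d). nra. Qed.

Lemma abs_bnd2 (A B C D dx ds : R) : Rabs dx <= 1 -> Rabs ds <= 1 -> 0 <= B -> 0 <= D ->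
  Rabs (A * dx + B * dx ^ 2 + C * ds + D * ds ^ 2) <= (Rabs A + B + Rabs C + D) * (Rabs dx + Rabs ds).
Proof. intros H1 H2 HB HD.
  eapply Rle_trans. apply Rabs_triang. eapply Rle_trans. apply Rplus_le_compat_r. apply Rabs_triang.
  eapply Rle_trans. apply Rplus_le_compat_r, Rplus_le_compat_r. apply Rabs_triang.
  rewrite !Rabs_mult, (Rabs_pos_eq B), (Rabs_pos_eq D), !(Rabs_pos_eq (_ ^ 2)) by (auto; apply pow2_ge_0).
  pose proof (sq_le_abs dx H1). pose proof (sq_le_abs ds H2). pose proof (Rabs_pos A). pose proof (Rabs_pos C).
  pose proof (Rabs_pos dx). pose proof (Rabs_pos ds).
  assert (Rabs A * Rabs dx <= Rabs A * (Rabs dx + Rabs ds)) by (apply Rmult_le_compat_l; lra).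
  assert (Rabs C * Rabs ds <= Rabs C * (Rabs dx + Rabs ds)) by (apply Rmult_le_compat_l; lra).
  assert (B * dx ^ 2 <= B * (Rabs dx + Rabs ds)) by (apply Rmult_le_compat_l; lra).
  assert (D * ds ^ 2 <= D * (Rabs dx + Rabs ds)) by (apply Rmult_le_compat_l; lra).
  lra. Qed.

Lemma abs_rem2 (B D dx ds : R) : 0 <= B -> 0 <= D ->
  Rabs (B * dx ^ 2 + D * ds ^ 2) <= (B + D) * (Rabs dx + Rabs ds) ^ 2.
Proof. intros HB HD. rewrite Rabs_pos_eq by (pose proof (pow2_ge_0 dx); pose proof (pow2_ge_0 ds); nra).
  rewrite (sq_abs dx), (sq_abs ds). pose proof (Rabs_pos dx). pose proof (Rabs_pos ds).
  assert (Rabs dx * Rabs dx <= (Rabs dx + Rabs ds) ^ 2) by nra.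
  assert (Rabs ds * Rabs ds <= (Rabs dx + Rabs ds) ^ 2) by nra.
  assert (B * (Rabs dx * Rabs dx) <= B * (Rabs dx + Rabs ds) ^ 2) by (apply Rmult_le_compat_l; lra).
  assert (D * (Rabs ds * Rabs ds) <= D * (Rabs dx + Rabs ds) ^ 2) by (apply Rmult_le_compat_l; lra).
  lra. Qed.

Definition qF (x y s K L : R) := (K + x * L + 1/2) ^ 2 + y ^ 2 * (L + s) ^ 2.
Definition thT (a x y s : R) (k l : Z) : R := exp (- (PI * a / y * qF x y s (IZR k) (IZR l))).

Lemma theta_eq a x y c1 c2 : c1 + x * c2 = 1/2 -> theta x y c1 c2 a = z2sum (thT a x y c2).
Proof. intros H. unfold theta. apply z2sum_ext. intros k l. unfold thT, qF. f_equal.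
  replace c1 with (1/2 - x * c2) by lra. ring. Qed.

Lemma B_G2 b C0 : 0 < b -> G2 (fun k l => exp C0 * exp (- b * nrm k l)).
Proof. intros Hb. apply G2_exp. exists b, (exp C0). split; auto. intros k l.
  rewrite Rabs_pos_eq. lra. apply Rmult_le_pos; apply Rlt_le, exp_pos. Qed.

Lemma expQ_le Q b C0 N : b * N - C0 <= Q -> exp (- Q) <= exp C0 * exp (- b * N).
Proof. intros H. rewrite <- exp_plus. apply exp_le. lra. Qed.

Section Fx.
Variables (a y0 : R).
Hypothesis Ha : 0 < a.
Hypothesis Hy0 : 0 < y0.
Hypothesis Hy02 : y0 ^ 2 = 3 / 4.

Let bt := PI * a / y0.
Lemma bt_pos : 0 < bt.
Proof. unfold bt. apply Rdiv_lt_0_compat; auto. pose proof PI_RGT_0. nra. Qed.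

Let Q0 (k l : Z) := bt * qF (1/2) y0 (1/3) (IZR k) (IZR l).
Let a0 (k l : Z) := IZR k + IZR l / 2 + 1/2.
Let b0 (k l : Z) := IZR l + 1/3.
Let Dp (k l : Z) := exp (- Q0 k l) * (- (bt * (2 * a0 k l * IZR l))).
Let Dq (k l : Z) := exp (- Q0 k l) * (- (bt * (2 * y0 ^ 2 * b0 k l))).
Let Pb (k l : Z) := bt * (Rabs (2 * a0 k l * IZR l) + IZR l ^ 2 + Rabs (2 * y0 ^ 2 * b0 k l) + y0 ^ 2).
Let Pb' (k l : Z) := bt * (IZR l ^ 2 + y0 ^ 2).
Let Bb (k l : Z) := exp (2 * bt) * exp (- (bt / 62) * nrm k l).
Let Mb (k l : Z) := 2 * (Pb k l ^ 2 + Pb' k l) * Bb k l.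

Lemma Fx_lb x q k l : Rabs (x - 1/2) <= 1 -> Rabs (q - 1/3) <= 1 ->
  bt / 62 * nrm k l - 2 * bt <= bt * qF x y0 q (IZR k) (IZR l).
Proof. intros H1 H2. pose proof bt_pos. apply abs_le_inv in H1. apply abs_le_inv in H2.
  pose proof (LB (IZR k) (IZR l) x q (1/2) (y0 ^ 2)) as X.
  assert (Rabs x <= 3/2) by (apply Rabs_le; lra). assert (Rabs q <= 2) by (apply Rabs_le; lra).
  assert (Rabs (1/2) <= 1) by (rewrite Rabs_pos_eq; lra). specialize (X H0 H3 H4 ltac:(lra)).
  unfold qF, nrm. nra. Qed.

Lemma Fx_G2e x q : Rabs (x - 1/2) <= 1 -> Rabs (q - 1/3) <= 1 -> G2 (thT a x y0 q).
Proof. intros H1 H2. apply (G2_expQ _ (fun k l => bt * qF x y0 q (IZR k) (IZR l)) (bt / 62) (2 * bt)).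
  pose proof bt_pos; lra. intros k l. unfold thT. rewrite Rabs_pos_eq by (apply Rlt_le, exp_pos). right. reflexivity.
  intros k l. apply Fx_lb; auto. Qed.

Lemma Q0_lb k l : bt / 62 * nrm k l - 2 * bt <= Q0 k l.
Proof. apply Fx_lb; rewrite Rminus_diag_eq, Rabs_R0; lra. Qed.

Lemma G2_Q0 (p : Z -> Z -> R) : Md p -> G2 (fun k l => exp (- Q0 k l) * p k l).
Proof. intros H. apply G2_mul; auto. apply (G2_expQ _ Q0 (bt / 62) (2 * bt)).
  pose proof bt_pos; lra. intros; rewrite Rabs_pos_eq by (apply Rlt_le, exp_pos); lra. apply Q0_lb. Qed.

Lemma Fx_G2Dp : G2 Dp.
Proof. apply G2_Q0. unfold a0. md. Qed.
Lemma Fx_G2Dq : G2 Dq.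
Proof. apply G2_Q0. unfold b0. md. Qed.
Lemma Fx_G2Mb : G2 Mb.
Proof. unfold Mb. apply (G2_le _ (fun k l => Bb k l * (2 * (Pb k l ^ 2 + Pb' k l)))).
  apply G2_mul. apply B_G2. pose proof bt_pos; lra. unfold Pb, Pb', a0, b0. md.
  intros; right; f_equal; ring. Qed.

Lemma Fx_rem x q k l : Rabs (x - 1/2) <= 1 -> Rabs (q - 1/3) <= 1 ->
  Rabs (thT a x y0 q k l - thT a (1/2) y0 (1/3) k l - (x - 1/2) * Dp k l - (q - 1/3) * Dq k l)
   <= Mb k l * ((x - 1/2) ^ 2 + (q - 1/3) ^ 2).
Proof. intros H1 H2. pose proof bt_pos.
  set (dx := x - 1/2) in *. set (ds := q - 1/3) in *.
  assert (Hxd : x = 1/2 + dx) by (unfold dx; ring). assert (Hqd : q = 1/3 + ds) by (unfold ds; ring).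
  clearbody dx ds.
  set (Q := bt * qF x y0 q (IZR k) (IZR l)).
  set (Q1 := bt * (2 * a0 k l * IZR l) * dx + bt * (2 * y0 ^ 2 * b0 k l) * ds).
  replace (thT a x y0 q k l - thT a (1/2) y0 (1/3) k l - dx * Dp k l - ds * Dq k l) with
    (exp (- Q) - exp (- Q0 k l) + exp (- Q0 k l) * Q1) by (unfold thT, Dp, Dq, Q, Q1, Q0, bt; ring).
  assert (HQ : Q - Q0 k l = (bt * (2 * a0 k l * IZR l)) * dx + (bt * IZR l ^ 2) * dx ^ 2 + (bt * (2 * y0 ^ 2 * b0 k l)) * ds + (bt * y0 ^ 2) * ds ^ 2).
  { unfold Q, Q0, qF, a0, b0. rewrite Hxd, Hqd. field. }
  assert (HQ1 : Q - Q0 k l - Q1 = (bt * IZR l ^ 2) * dx ^ 2 + (bt * y0 ^ 2) * ds ^ 2) by (rewrite HQ; unfold Q1; ring).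
  assert (P1 : Rabs (Q - Q0 k l) <= Pb k l * (Rabs dx + Rabs ds)).
  { rewrite HQ. eapply Rle_trans. apply abs_bnd2; auto; pose proof (pow2_ge_0 (IZR l)); nra.
    unfold Pb. rewrite !Rabs_mult, (Rabs_pos_eq bt) by lra. right. ring. }
  assert (P2 : Rabs (Q - Q0 k l - Q1) <= Pb' k l * (Rabs dx + Rabs ds) ^ 2).
  { rewrite HQ1. eapply Rle_trans. apply abs_rem2; pose proof (pow2_ge_0 (IZR l)); nra. unfold Pb'. right; ring. }
  assert (B1 : exp (- Q) <= Bb k l).
  { unfold Bb. replace (- (bt / 62) * nrm k l) with (- (bt / 62 * nrm k l)) by ring. 
    rewrite <- exp_plus. apply exp_le. unfold Q.
    assert (Hx' : Rabs (x - 1/2) <= 1) by (rewrite Hxd; replace (1/2 + dx - 1/2) with dx by ring; auto).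
    assert (Hq' : Rabs (q - 1/3) <= 1) by (rewrite Hqd; replace (1/3 + ds - 1/3) with ds by ring; auto).
    pose proof (Fx_lb x q k l Hx' Hq'). lra. }
  assert (B2 : exp (- Q0 k l) <= Bb k l).
  { unfold Bb. rewrite <- exp_plus. apply exp_le. pose proof (Q0_lb k l). lra. }
  pose proof (gen_exp Q (Q0 k l) Q1 (Pb k l) (Pb' k l) (Rabs dx + Rabs ds) (Bb k l)
     ltac:(pose proof (Rabs_pos dx); pose proof (Rabs_pos ds); lra) P1 P2 B1 B2) as G.
  eapply Rle_trans. apply G. unfold Mb.
  assert (0 <= Pb' k l) by (unfold Pb'; pose proof (pow2_ge_0 (IZR l)); pose proof (pow2_ge_0 y0); nra).
  assert (0 < Bb k l) by (unfold Bb; apply Rmult_lt_0_compat; apply exp_pos).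
  pose proof (pow2_ge_0 (Pb k l)). pose proof (h_sq dx ds).
  assert (0 <= (Pb k l ^ 2 + Pb' k l) * Bb k l) by nra. nra. Qed.

Lemma Fx_sum0 : z2sum Dp = 0.
Proof. apply (refl0 Dp (-1)). apply Fx_G2Dp. intros k l. unfold Dp, Q0, a0, qF. pushZ.
  replace (bt * ((- IZR k - IZR l + -1 + 1 / 2 * IZR l + 1 / 2) ^ 2 + y0 ^ 2 * (IZR l + 1 / 3) ^ 2)) with
    (bt * ((IZR k + 1 / 2 * IZR l + 1 / 2) ^ 2 + y0 ^ 2 * (IZR l + 1 / 3) ^ 2)) by field. field. Qed.

End Fx.

Lemma Fx_case (a y0 : R) (s : R -> R) : 0 < a -> 0 < y0 -> y0 ^ 2 = 3 / 4 ->
  s (1/2) = 1/3 -> is_derive s (1/2) 0 -> is_derive (fun x => z2sum (thT a x y0 (s x))) (1/2) 0.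
Proof. intros Ha Hy0 Hy02 Hs Hsd.
  eapply (key (fun x q => thT a x y0 q) (1/2) (1/3) 1 s).
  lra. exact Hs. exact Hsd. intros; apply Fx_G2e; auto.
  apply (Fx_G2Dp a y0); auto. apply (Fx_G2Dq a y0); auto. apply (Fx_G2Mb a y0); auto.
  intros; apply (Fx_rem a y0); auto. apply (Fx_sum0 a y0); auto. Qed.

Lemma abs_bnd3 (A C E dx ds : R) : Rabs dx <= 1 -> Rabs ds <= 1 ->
  Rabs (A * dx + C * ds + E * (dx * ds)) <= (Rabs A + Rabs C + Rabs E) * (Rabs dx + Rabs ds).
Proof. intros H1 H2. eapply Rle_trans. apply Rabs_triang. eapply Rle_trans. apply Rplus_le_compat_r. apply Rabs_triang.
  rewrite !Rabs_mult. pose proof (Rabs_pos A). pose proof (Rabs_pos C). pose proof (Rabs_pos E).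
  pose proof (Rabs_pos dx). pose proof (Rabs_pos ds).
  assert (Rabs A * Rabs dx <= Rabs A * (Rabs dx + Rabs ds)) by (apply Rmult_le_compat_l; lra).
  assert (Rabs C * Rabs ds <= Rabs C * (Rabs dx + Rabs ds)) by (apply Rmult_le_compat_l; lra).
  assert (Rabs dx * Rabs ds <= Rabs dx + Rabs ds) by nra.
  assert (Rabs E * (Rabs dx * Rabs ds) <= Rabs E * (Rabs dx + Rabs ds)) by (apply Rmult_le_compat_l; lra).
  lra. Qed.

Lemma abs_rem3 (E dx ds : R) : Rabs (E * (dx * ds)) <= Rabs E * (Rabs dx + Rabs ds) ^ 2.
Proof. rewrite !Rabs_mult. pose proof (Rabs_pos E). pose proof (Rabs_pos dx). pose proof (Rabs_pos ds).
  apply Rmult_le_compat_l; auto. nra. Qed.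

Definition qG (x y K L : R) := K ^ 2 + 2 * x * K * L + (x ^ 2 + y ^ 2) * L ^ 2.
Definition phG (x s K L : R) := 2 * PI * ((K + x * L) * s - L / 2).
Definition htT (a x y s : R) (k l : Z) : R :=
  exp (- (PI * a / y * qG x y (IZR k) (IZR l))) * cos (phG x s (IZR k) (IZR l)).

Lemma hat_eq a x y c1 c2 : c1 + x * c2 = 1/2 -> thetahat_re x y c1 c2 a = z2sum (htT a x y c2).
Proof. intros H. unfold thetahat_re. apply z2sum_ext. intros k l. unfold htT, gw, qG, phG. f_equal.
  f_equal. f_equal. ring. f_equal. replace c1 with (1/2 - x * c2) by lra. field. Qed.

Section Gx.
Variables (a y0 : R).
Hypothesis Ha : 0 < a.
Hypothesis Hy0 : 0 < y0.
Hypothesis Hy02 : y0 ^ 2 = 3 / 4.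

Let bt := PI * a / y0.
Lemma btG_pos : 0 < bt.
Proof. unfold bt. apply Rdiv_lt_0_compat; auto. pose proof PI_RGT_0. nra. Qed.

Let Q0 (k l : Z) := bt * qG (1/2) y0 (IZR k) (IZR l).
Let F0 (k l : Z) := phG (1/2) (1/3) (IZR k) (IZR l).
Let a0 (k l : Z) := IZR k + IZR l / 2.
Let Dp (k l : Z) := exp (- Q0 k l) * (- (bt * (2 * a0 k l * IZR l) * cos (F0 k l) + sin (F0 k l) * (2 * PI * (IZR l / 3)))).
Let Dq (k l : Z) := exp (- Q0 k l) * (- (sin (F0 k l) * (2 * PI * a0 k l))).
Let Pb (k l : Z) := bt * (Rabs (2 * a0 k l * IZR l) + IZR l ^ 2).
Let Pb' (k l : Z) := bt * IZR l ^ 2.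
Let Rb (k l : Z) := Rabs (2 * PI * (IZR l / 3)) + Rabs (2 * PI * a0 k l) + Rabs (2 * PI * IZR l).
Let Rb' (k l : Z) := Rabs (2 * PI * IZR l).
Let Bb (k l : Z) := exp (2 * bt) * exp (- (bt / 62) * nrm k l).
Let Mb (k l : Z) := 2 * (Pb k l ^ 2 + Pb' k l + Rb k l ^ 2 + Rb' k l + Pb k l * Rb k l) * Bb k l.

Lemma trig_bnd u v F : Rabs (u * cos F + sin F * v) <= Rabs u + Rabs v.
Proof. eapply Rle_trans. apply Rabs_triang. rewrite !Rabs_mult.
  assert (Rabs (cos F) <= 1) by (apply Rabs_le; apply COS_bound).
  assert (Rabs (sin F) <= 1) by (apply Rabs_le; apply SIN_bound).
  pose proof (Rabs_pos u). pose proof (Rabs_pos v). pose proof (Rabs_pos (cos F)). pose proof (Rabs_pos (sin F)). nra. Qed.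

Lemma Gx_lb x k l : Rabs (x - 1/2) <= 1 -> bt / 62 * nrm k l - 2 * bt <= bt * qG x y0 (IZR k) (IZR l).
Proof. intros H1. pose proof btG_pos. apply abs_le_inv in H1.
  pose proof (LB (IZR k) (IZR l) x 0 0 (y0 ^ 2)) as X.
  assert (Rabs x <= 3/2) by (apply Rabs_le; lra). assert (Rabs 0 <= 2) by (rewrite Rabs_R0; lra).
  assert (Rabs 0 <= 1) by (rewrite Rabs_R0; lra). specialize (X H0 H2 H3 ltac:(lra)).
  replace (qG x y0 (IZR k) (IZR l)) with ((IZR k + x * IZR l + 0) ^ 2 + y0 ^ 2 * (IZR l + 0) ^ 2) by (unfold qG; ring).
  unfold nrm. nra. Qed.

Lemma exp_cos_le Q F : Rabs (exp (- Q) * cos F) <= Rabs (exp (- Q)).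
Proof. rewrite Rabs_mult. assert (Rabs (cos F) <= 1) by (apply Rabs_le; apply COS_bound).
  pose proof (Rabs_pos (exp (- Q))). nra. Qed.

Lemma Gx_G2e x q : Rabs (x - 1/2) <= 1 -> G2 (htT a x y0 q).
Proof. intros H1. apply (G2_le _ (fun k l => exp (- (bt * qG x y0 (IZR k) (IZR l))))).
  apply (G2_expQ _ (fun k l => bt * qG x y0 (IZR k) (IZR l)) (bt / 62) (2 * bt)).
  pose proof btG_pos; lra. intros; rewrite Rabs_pos_eq by (apply Rlt_le, exp_pos); lra. intros k l. apply Gx_lb; auto.
  intros k l. unfold htT. apply exp_cos_le. Qed.

Lemma Q0G_lb k l : bt / 62 * nrm k l - 2 * bt <= Q0 k l.
Proof. apply Gx_lb; rewrite Rminus_diag_eq, Rabs_R0; lra. Qed.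

Lemma G2_Q0G (p : Z -> Z -> R) : Md p -> G2 (fun k l => exp (- Q0 k l) * p k l).
Proof. intros H. apply G2_mul; auto. apply (G2_expQ _ Q0 (bt / 62) (2 * bt)).
  pose proof btG_pos; lra. intros; rewrite Rabs_pos_eq by (apply Rlt_le, exp_pos); lra. apply Q0G_lb. Qed.

Lemma Gx_G2Dp : G2 Dp.
Proof. apply (G2_le _ (fun k l => exp (- Q0 k l) * (Rabs (bt * (2 * a0 k l * IZR l)) + Rabs (2 * PI * (IZR l / 3))))).
  apply G2_Q0G. unfold a0. md. intros k l. unfold Dp. rewrite !(Rabs_mult (exp _)), Rabs_Ropp.
  apply Rmult_le_compat_l. apply Rabs_pos. rewrite (Rabs_pos_eq (Rabs (bt * (2 * a0 k l * IZR l)) + Rabs (2 * PI * (IZR l / 3)))). apply trig_bnd.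
  pose proof (Rabs_pos (bt * (2 * a0 k l * IZR l))). pose proof (Rabs_pos (2 * PI * (IZR l / 3))). lra. Qed.

Lemma Gx_G2Dq : G2 Dq.
Proof. apply (G2_le _ (fun k l => exp (- Q0 k l) * Rabs (2 * PI * a0 k l))).
  apply G2_Q0G. unfold a0. md. intros k l. unfold Dq.
  rewrite (Rabs_mult (exp (- Q0 k l))), (Rabs_mult (exp (- Q0 k l)) (Rabs _)), Rabs_Ropp, Rabs_Rabsolu.
  apply Rmult_le_compat_l. apply Rabs_pos. rewrite Rabs_mult.
  assert (Rabs (sin (F0 k l)) <= 1) by (apply Rabs_le; apply SIN_bound).
  pose proof (Rabs_pos (sin (F0 k l))). pose proof (Rabs_pos (2 * PI * a0 k l)). nra. Qed.

Lemma Gx_G2Mb : G2 Mb.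
Proof. unfold Mb. apply (G2_le _ (fun k l => Bb k l * (2 * (Pb k l ^ 2 + Pb' k l + Rb k l ^ 2 + Rb' k l + Pb k l * Rb k l)))).
  apply G2_mul. apply B_G2. pose proof btG_pos; lra. unfold Pb, Pb', Rb, Rb', a0. md.
  intros; right; f_equal; ring. Qed.

Lemma Gx_rem x q k l : Rabs (x - 1/2) <= 1 -> Rabs (q - 1/3) <= 1 ->
  Rabs (htT a x y0 q k l - htT a (1/2) y0 (1/3) k l - (x - 1/2) * Dp k l - (q - 1/3) * Dq k l)
   <= Mb k l * ((x - 1/2) ^ 2 + (q - 1/3) ^ 2).
Proof. intros H1 H2. pose proof btG_pos.
  assert (Hx' := H1). assert (Hq' := H2).
  set (dx := x - 1/2) in *. set (ds := q - 1/3) in *.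
  assert (Hxd : x = 1/2 + dx) by (unfold dx; ring). assert (Hqd : q = 1/3 + ds) by (unfold ds; ring).
  clearbody dx ds.
  set (Q := bt * qG x y0 (IZR k) (IZR l)).
  set (F := phG x q (IZR k) (IZR l)).
  set (Q1 := bt * (2 * a0 k l * IZR l) * dx).
  set (F1 := 2 * PI * (IZR l / 3) * dx + 2 * PI * a0 k l * ds).
  replace (htT a x y0 q k l - htT a (1/2) y0 (1/3) k l - dx * Dp k l - ds * Dq k l) with
    (exp (- Q) * cos F - exp (- Q0 k l) * cos (F0 k l) - (- exp (- Q0 k l) * Q1 * cos (F0 k l) - exp (- Q0 k l) * sin (F0 k l) * F1))
    by (unfold htT, Dp, Dq, Q, Q1, F, F1, Q0, F0, bt; ring).
  assert (HQ : Q - Q0 k l = (bt * (2 * a0 k l * IZR l)) * dx + (bt * IZR l ^ 2) * dx ^ 2 + 0 * ds + 0 * ds ^ 2).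
  { unfold Q, Q0, qG, a0. rewrite Hxd. field. }
  assert (HQ1 : Q - Q0 k l - Q1 = (bt * IZR l ^ 2) * dx ^ 2 + 0 * ds ^ 2) by (rewrite HQ; unfold Q1; ring).
  assert (HF : F - F0 k l = (2 * PI * (IZR l / 3)) * dx + (2 * PI * a0 k l) * ds + (2 * PI * IZR l) * (dx * ds)).
  { unfold F, F0, phG, a0. rewrite Hxd, Hqd. field. }
  assert (HF1 : F - F0 k l - F1 = (2 * PI * IZR l) * (dx * ds)) by (rewrite HF; unfold F1; ring).
  assert (P1 : Rabs (Q - Q0 k l) <= Pb k l * (Rabs dx + Rabs ds)).
  { rewrite HQ. eapply Rle_trans. apply abs_bnd2; auto; pose proof (pow2_ge_0 (IZR l)); nra.
    unfold Pb. rewrite Rabs_R0, !Rabs_mult, (Rabs_pos_eq bt) by lra. right. ring. }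
  assert (P2 : Rabs (Q - Q0 k l - Q1) <= Pb' k l * (Rabs dx + Rabs ds) ^ 2).
  { rewrite HQ1. eapply Rle_trans. apply abs_rem2; pose proof (pow2_ge_0 (IZR l)); nra. unfold Pb'. right; ring. }
  assert (R1 : Rabs (F - F0 k l) <= Rb k l * (Rabs dx + Rabs ds)).
  { rewrite HF. eapply Rle_trans. apply abs_bnd3; auto. unfold Rb. right; ring. }
  assert (R2 : Rabs (F - F0 k l - F1) <= Rb' k l * (Rabs dx + Rabs ds) ^ 2).
  { rewrite HF1. apply abs_rem3. }
  assert (B1 : exp (- Q) <= Bb k l).
  { unfold Bb. rewrite <- exp_plus. apply exp_le. unfold Q.
    assert (Hx'' : Rabs (x - 1/2) <= 1) by (rewrite Hxd; replace (1/2 + dx - 1/2) with dx by ring; auto).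
    pose proof (Gx_lb x k l Hx''). lra. }
  assert (B2 : exp (- Q0 k l) <= Bb k l).
  { unfold Bb. rewrite <- exp_plus. apply exp_le. pose proof (Q0G_lb k l). lra. }
  pose proof (gen_expcos Q (Q0 k l) Q1 (Pb k l) (Pb' k l) F (F0 k l) F1 (Rb k l) (Rb' k l) (Rabs dx + Rabs ds) (Bb k l)
     ltac:(pose proof (Rabs_pos dx); pose proof (Rabs_pos ds); lra) P1 P2 R1 R2 B1 B2) as G.
  eapply Rle_trans. apply G. unfold Mb.
  assert (0 <= Pb' k l) by (unfold Pb'; pose proof (pow2_ge_0 (IZR l)); nra).
  assert (0 <= Pb k l) by (unfold Pb; pose proof (pow2_ge_0 (IZR l)); pose proof (Rabs_pos (2 * a0 k l * IZR l)); nra).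
  assert (0 <= Rb' k l) by (unfold Rb'; apply Rabs_pos).
  assert (0 <= Rb k l) by (unfold Rb; pose proof (Rabs_pos (2 * PI * (IZR l / 3))); pose proof (Rabs_pos (2 * PI * a0 k l)); pose proof (Rabs_pos (2 * PI * IZR l)); lra).
  assert (0 < Bb k l) by (unfold Bb; apply Rmult_lt_0_compat; apply exp_pos).
  pose proof (pow2_ge_0 (Pb k l)). pose proof (pow2_ge_0 (Rb k l)). pose proof (h_sq dx ds).
  assert (HW : 0 <= (Pb k l ^ 2 + Pb' k l + Rb k l ^ 2 + Rb' k l + Pb k l * Rb k l) * Bb k l).
  { apply Rmult_le_pos; [|lra]. assert (0 <= Pb k l * Rb k l) by (apply Rmult_le_pos; auto). lra. }
  set (W := (Pb k l ^ 2 + Pb' k l + Rb k l ^ 2 + Rb' k l + Pb k l * Rb k l)) in *.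
  replace (W * (Rabs dx + Rabs ds) ^ 2 * Bb k l) with ((W * Bb k l) * (Rabs dx + Rabs ds) ^ 2) by ring.
  replace (2 * W * Bb k l * (dx ^ 2 + ds ^ 2)) with ((W * Bb k l) * (2 * (dx ^ 2 + ds ^ 2))) by ring.
  apply Rmult_le_compat_l; auto. Qed.

Lemma Gx_sum0 : z2sum Dp = 0.
Proof. apply (refl0 Dp 0). apply Gx_G2Dp. intros k l. unfold Dp, Q0, F0, a0, qG.
  replace (IZR (- k - l + 0)) with (- IZR k - IZR l) by (pushZ; ring).
  replace (phG (1/2) (1/3) (- IZR k - IZR l) (IZR l)) with (- phG (1/2) (1/3) (IZR k) (IZR l) + 2 * PI * IZR (- l))
    by (unfold phG; pushZ; field).
  rewrite cosZ, sinZ, cos_neg, sin_neg.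
  replace (bt * ((- IZR k - IZR l) ^ 2 + 2 * (1 / 2) * (- IZR k - IZR l) * IZR l + ((1 / 2) ^ 2 + y0 ^ 2) * IZR l ^ 2)) with
    (bt * (IZR k ^ 2 + 2 * (1 / 2) * IZR k * IZR l + ((1 / 2) ^ 2 + y0 ^ 2) * IZR l ^ 2)) by field. field. Qed.

End Gx.

Lemma Gx_case (a y0 : R) (s : R -> R) : 0 < a -> 0 < y0 -> y0 ^ 2 = 3 / 4 ->
  s (1/2) = 1/3 -> is_derive s (1/2) 0 -> is_derive (fun x => z2sum (htT a x y0 (s x))) (1/2) 0.
Proof. intros Ha Hy0 Hy02 Hs Hsd.
  eapply (key (fun x q => htT a x y0 q) (1/2) (1/3) 1 s).
  lra. exact Hs. exact Hsd. intros; apply Gx_G2e; auto.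
  apply (Gx_G2Dp a y0); auto. apply (Gx_G2Dq a y0); auto. apply (Gx_G2Mb a y0); auto.
  intros; apply (Gx_rem a y0); auto. apply (Gx_sum0 a y0); auto. Qed.

Lemma lin_y0 y0 A B A' B' : 0 < y0 -> y0 ^ 2 = 3 / 4 -> A + 3 / 4 * B = A' + 3 / 4 * B' ->
  A * / y0 + B * y0 = A' * / y0 + B' * y0.
Proof. intros H0 H1 H2. replace (B * y0) with (y0 ^ 2 * B * / y0) by (field; lra).
  replace (B' * y0) with (y0 ^ 2 * B' * / y0) by (field; lra). rewrite H1.
  apply (Rmult_eq_reg_r y0); [|lra]. field_simplify; [|lra|lra]. lra. Qed.

Lemma inv_y0_2 y0 : 0 < y0 -> y0 ^ 2 = 3 / 4 -> / y0 ^ 2 = 4 / 3.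
Proof. intros H0 H1. rewrite H1. field. Qed.
Lemma inv_y0_4 y0 : 0 < y0 -> y0 ^ 2 = 3 / 4 -> / y0 ^ 4 = 16 / 9.
Proof. intros H0 H1. replace (y0 ^ 4) with ((y0 ^ 2) ^ 2) by ring. rewrite H1. field. Qed.

Section Fy.
Variables (a y0 : R).
Hypothesis Ha : 0 < a.
Hypothesis Hy0 : 0 < y0.
Hypothesis Hy02 : y0 ^ 2 = 3 / 4.

Let cc := PI * a.
Lemma cc_pos : 0 < cc.
Proof. unfold cc. pose proof PI_RGT_0. nra. Qed.

Let mm (k l : Z) := IZR k + IZR l / 2 + 1 / 2.
Let ww (k l : Z) := IZR l + 1 / 2.
Let cF (k l : Z) := mm k l ^ 2 - ww k l / 4.
Let Qy (y : R) (k l : Z) := cc * (cF k l * / y + ww k l ^ 2 * y + 1 / 64 * / y ^ 3).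
Let Dd (k l : Z) := cc * (cF k l * (- / y0 ^ 2) + ww k l ^ 2 + 1 / 64 * (- 3 / y0 ^ 4)).
Let Dp (k l : Z) := exp (- Qy y0 k l) * (- Dd k l).
Let Pb (k l : Z) := cc * (Rabs (cF k l) * 10 + ww k l ^ 2 + 1 / 64 * 30).
Let Pb' (k l : Z) := cc * (Rabs (cF k l) * 10 + 1 / 64 * 100).
Let Bb (k l : Z) := exp (cc * (10 / 3)) * exp (- (cc * (5 / 372)) * nrm k l).
Let Mb (k l : Z) := (Pb k l ^ 2 + Pb' k l) * Bb k l.

Lemma Fy_eq y k l : 3 / 5 <= y -> thT a (1/2) y (a2 (1/2) y) k l = exp (- Qy y k l).
Proof. intros H. unfold thT, Qy, qF, a2, cF, mm, ww, cc. f_equal. f_equal. field. lra. Qed.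

Lemma Fy_lb y k l : Rabs (y - y0) <= 1 / 4 -> cc * (5 / 372) * nrm k l - cc * (10 / 3) <= Qy y k l.
Proof. intros H. destruct (y_bnd y0 Hy0 Hy02 y H) as [Y1 Y2]. pose proof cc_pos.
  assert (E : Qy y k l = cc / y * qF (1/2) y (a2 (1/2) y) (IZR k) (IZR l)).
  { unfold Qy, qF, a2, cF, mm, ww. field. lra. }
  rewrite E. pose proof (LB (IZR k) (IZR l) (1/2) (a2 (1/2) y) (1/2) (y ^ 2)) as X.
  assert (Ha2 : 0 <= a2 (1/2) y <= 1/2).
  { unfold a2. assert (0 < y ^ 2) by nra. split. apply Rmult_le_pos. nra. left; apply Rinv_0_lt_compat; nra.
    apply (Rmult_le_reg_r (2 * y ^ 2)). nra. unfold Rdiv. rewrite Rmult_assoc, Rinv_l by nra. nra. }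
  assert (Rabs (1/2) <= 3/2) by (rewrite Rabs_pos_eq; lra). assert (Rabs (a2 (1/2) y) <= 2) by (rewrite Rabs_pos_eq; lra).
  assert (Rabs (1/2) <= 1) by (rewrite Rabs_pos_eq; lra). specialize (X H1 H2 H3 ltac:(nra)).
  fold (qF (1/2) y (a2 (1/2) y) (IZR k) (IZR l)) in X.
  assert (Hq0 : 0 <= qF (1/2) y (a2 (1/2) y) (IZR k) (IZR l)) by (unfold qF; pose proof (pow2_ge_0 (IZR k + 1/2 * IZR l + 1/2)); pose proof (pow2_ge_0 (IZR l + a2 (1/2) y)); nra).
  assert (Hy : 5 / 6 <= / y <= 5 / 3). { split; [apply (Rmult_le_reg_l y); [lra|]; rewrite Rinv_r by lra; lra|].
    apply (Rmult_le_reg_l y); [lra|]. rewrite Rinv_r by lra. lra. }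
  replace (cc / y * qF (1/2) y (a2 (1/2) y) (IZR k) (IZR l)) with (cc * (/ y * qF (1/2) y (a2 (1/2) y) (IZR k) (IZR l))) by (unfold Rdiv; ring).
  apply Rle_trans with (cc * (/ y * (nrm k l / 62 - 2))).
  pose proof (nrm_ge0 k l). set (Nn := nrm k l) in *. set (u := / y) in *.
  assert (u * (Nn / 62 - 2) >= 5 / 372 * Nn - 10 / 3) by nra.
  assert (cc * (u * (Nn / 62 - 2) - (5 / 372 * Nn - 10 / 3)) >= 0) by (apply Rle_ge, Rmult_le_pos; lra).
  lra.
  apply Rmult_le_compat_l. lra. apply Rmult_le_compat_l. lra. unfold nrm. lra. Qed.

Lemma Fy_G2e y : Rabs (y - y0) <= 1 / 4 -> G2 (thT a (1/2) y (a2 (1/2) y)).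
Proof. intros H. destruct (y_bnd y0 Hy0 Hy02 y H) as [Y1 Y2].
  apply (G2_expQ _ (Qy y) (cc * (5 / 372)) (cc * (10 / 3))). pose proof cc_pos; lra.
  intros k l. rewrite Fy_eq by lra. rewrite Rabs_pos_eq by (apply Rlt_le, exp_pos). lra.
  intros; apply Fy_lb; auto. Qed.

Lemma Q0y_lb k l : cc * (5 / 372) * nrm k l - cc * (10 / 3) <= Qy y0 k l.
Proof. apply Fy_lb; rewrite Rminus_diag_eq, Rabs_R0; lra. Qed.

Lemma Fy_G2Dp : G2 Dp.
Proof. apply G2_mul. apply (G2_expQ _ (Qy y0) (cc * (5 / 372)) (cc * (10 / 3))). pose proof cc_pos; lra.
  intros; rewrite Rabs_pos_eq by (apply Rlt_le, exp_pos); lra. apply Q0y_lb.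
  unfold Dd, cF, mm, ww. md. Qed.

Lemma Fy_G2Mb : G2 Mb.
Proof. unfold Mb. apply (G2_le _ (fun k l => Bb k l * (Pb k l ^ 2 + Pb' k l))).
  apply G2_mul. apply B_G2. pose proof cc_pos; lra. unfold Pb, Pb', cF, mm, ww. md.
  intros; right; f_equal; ring. Qed.

Lemma Fy_rem y q k l : Rabs (y - y0) <= 1/4 -> Rabs (q - 0) <= 1/4 ->
  Rabs (thT a (1/2) y (a2 (1/2) y) k l - thT a (1/2) y0 (a2 (1/2) y0) k l - (y - y0) * Dp k l - (q - 0) * (fun _ _ => 0) k l)
   <= Mb k l * ((y - y0) ^ 2 + (q - 0) ^ 2).
Proof. intros H1 H2. pose proof cc_pos. destruct (y_bnd y0 Hy0 Hy02 y H1) as [Y1 Y2].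
  pose proof (y0_bnd y0 Hy0 Hy02) as Y0.
  rewrite !Fy_eq by lra.
  destruct (f1_bnd y0 Hy0 Hy02 y H1) as [A1 A2]. destruct (f3_bnd y0 Hy0 Hy02 y H1) as [C1 C2].
  set (dy := y - y0) in *.
  set (Q1 := dy * Dd k l).
  replace (exp (- Qy y k l) - exp (- Qy y0 k l) - dy * Dp k l - (q - 0) * 0) with
    (exp (- Qy y k l) - exp (- Qy y0 k l) + exp (- Qy y0 k l) * Q1) by (unfold Dp, Q1; ring).
  assert (HQ : Qy y k l - Qy y0 k l = cc * (cF k l * (/ y - / y0) + ww k l ^ 2 * dy + 1 / 64 * (/ y ^ 3 - / y0 ^ 3))).
  { unfold Qy, dy. ring. }
  assert (HQ1 : Qy y k l - Qy y0 k l - Q1 = cc * (cF k l * (/ y - / y0 - (- / y0 ^ 2) * dy) + 1 / 64 * (/ y ^ 3 - / y0 ^ 3 - (- 3 / y0 ^ 4) * dy))).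
  { rewrite HQ. unfold Q1, Dd. ring. }
  assert (P1 : Rabs (Qy y k l - Qy y0 k l) <= Pb k l * Rabs dy).
  { rewrite HQ, Rabs_mult, (Rabs_pos_eq cc) by lra. unfold Pb. rewrite Rmult_assoc. apply Rmult_le_compat_l. lra.
    eapply Rle_trans. apply Rabs_triang. eapply Rle_trans. apply Rplus_le_compat_r. apply Rabs_triang.
    rewrite !Rabs_mult, (Rabs_pos_eq (1/64)) by lra. rewrite (Rabs_pos_eq (ww k l ^ 2)) by apply pow2_ge_0.
    pose proof (Rabs_pos (cF k l)). pose proof (pow2_ge_0 (ww k l)).
    assert (Rabs (cF k l) * Rabs (/ y - / y0) <= Rabs (cF k l) * (10 * Rabs dy)) by (apply Rmult_le_compat_l; auto).
    assert (1 / 64 * Rabs (/ y ^ 3 - / y0 ^ 3) <= 1/64 * (30 * Rabs dy)) by (apply Rmult_le_compat_l; lra).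
    nra. }
  assert (P2 : Rabs (Qy y k l - Qy y0 k l - Q1) <= Pb' k l * Rabs dy ^ 2).
  { rewrite HQ1, Rabs_mult, (Rabs_pos_eq cc) by lra. unfold Pb'. rewrite Rmult_assoc. apply Rmult_le_compat_l. lra.
    eapply Rle_trans. apply Rabs_triang. rewrite !Rabs_mult, (Rabs_pos_eq (1/64)) by lra.
    rewrite pow2_abs. pose proof (Rabs_pos (cF k l)). pose proof (pow2_ge_0 dy).
    assert (Rabs (cF k l) * Rabs (/ y - / y0 - - / y0 ^ 2 * dy) <= Rabs (cF k l) * (10 * dy ^ 2)) by (apply Rmult_le_compat_l; auto).
    assert (1 / 64 * Rabs (/ y ^ 3 - / y0 ^ 3 - - 3 / y0 ^ 4 * dy) <= 1/64 * (100 * dy ^ 2)) by (apply Rmult_le_compat_l; lra).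
    nra. }
  assert (B1 : exp (- Qy y k l) <= Bb k l).
  { unfold Bb. rewrite <- exp_plus. apply exp_le. pose proof (Fy_lb y k l H1). lra. }
  assert (B2 : exp (- Qy y0 k l) <= Bb k l).
  { unfold Bb. rewrite <- exp_plus. apply exp_le. pose proof (Q0y_lb k l). lra. }
  pose proof (gen_exp _ _ Q1 (Pb k l) (Pb' k l) (Rabs dy) (Bb k l) (Rabs_pos dy) P1 P2 B1 B2) as G.
  eapply Rle_trans. apply G. unfold Mb.
  assert (0 <= Pb' k l) by (unfold Pb'; pose proof (Rabs_pos (cF k l)); nra).
  assert (0 < Bb k l) by (unfold Bb; apply Rmult_lt_0_compat; apply exp_pos).
  pose proof (pow2_ge_0 (Pb k l)). rewrite pow2_abs. pose proof (pow2_ge_0 (q - 0)).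
  assert (HW : 0 <= (Pb k l ^ 2 + Pb' k l) * Bb k l) by (apply Rmult_le_pos; lra).
  replace ((Pb k l ^ 2 + Pb' k l) * dy ^ 2 * Bb k l) with (((Pb k l ^ 2 + Pb' k l) * Bb k l) * dy ^ 2) by ring.
  apply Rmult_le_compat_l; auto. lra. Qed.

Lemma Fy_sum0 : z2sum Dp = 0.
Proof. apply (rot0 (fun k l => exp (- Qy y0 k l)) (fun k l => - Dd k l) (-1)).
  apply Fy_G2Dp.
  - intros k l. unfold Qy.
    assert (X : cF (- k - l + -1)%Z k * / y0 + ww (- k - l + -1)%Z k ^ 2 * y0 = cF k l * / y0 + ww k l ^ 2 * y0).
    { apply (lin_y0 y0); auto. unfold cF, mm, ww. pushZ. field. }
    rewrite X. reflexivity.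
  - intros k l. unfold Dd, cF, mm, ww. rewrite (inv_y0_2 y0) by auto. unfold Rdiv. rewrite (inv_y0_4 y0) by auto. pushZ. field. Qed.

End Fy.

Lemma Fy_case (a y0 : R) : 0 < a -> 0 < y0 -> y0 ^ 2 = 3 / 4 ->
  is_derive (fun y => z2sum (thT a (1/2) y (a2 (1/2) y))) y0 0.
Proof. intros Ha Hy0 Hy02.
  eapply (key (fun y (q : R) => thT a (1/2) y (a2 (1/2) y)) y0 0 (1/4) (fun _ => 0) _ (fun _ _ => 0)).
  lra. reflexivity. apply is_derive_Reals; apply derivable_pt_lim_const. intros; apply (Fy_G2e a y0); auto.
  apply (Fy_G2Dp a y0); auto. exists 1, 0. split. lra. intros; rewrite Rabs_R0; lra. apply (Fy_G2Mb a); auto.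
  intros; apply (Fy_rem a y0); auto. apply (Fy_sum0 a y0); auto. Qed.

Section Gy.
Variables (a y0 : R).
Hypothesis Ha : 0 < a.
Hypothesis Hy0 : 0 < y0.
Hypothesis Hy02 : y0 ^ 2 = 3 / 4.

Let cc := PI * a.
Lemma ccG_pos : 0 < cc.
Proof. unfold cc. pose proof PI_RGT_0. nra. Qed.

Let XX (k l : Z) := IZR k + IZR l / 2.
Let Qg (y : R) (k l : Z) := cc * (XX k l ^ 2 * / y + IZR l ^ 2 * y).
Let Fg (y : R) (k l : Z) := PI * (XX k l - IZR l) - PI * XX k l / 4 * / y ^ 2.
Let DQ (k l : Z) := cc * (XX k l ^ 2 * (- / y0 ^ 2) + IZR l ^ 2).
Let DF (k l : Z) := - (PI * XX k l / 4) * (- 2 / y0 ^ 3).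
Let Dp (k l : Z) := exp (- Qg y0 k l) * (- (DQ k l * cos (Fg y0 k l)) - sin (Fg y0 k l) * DF k l).
Let Pb (k l : Z) := cc * (XX k l ^ 2 * 10 + IZR l ^ 2).
Let Pb' (k l : Z) := cc * (XX k l ^ 2 * 10).
Let Rb (k l : Z) := Rabs (PI * XX k l / 4) * 10.
Let Rb' (k l : Z) := Rabs (PI * XX k l / 4) * 30.
Let Bb (k l : Z) := exp (cc * (10 / 3)) * exp (- (cc * (5 / 372)) * nrm k l).
Let Mb (k l : Z) := (Pb k l ^ 2 + Pb' k l + Rb k l ^ 2 + Rb' k l + Pb k l * Rb k l) * Bb k l.

Lemma Gy_eq y k l : 3 / 5 <= y -> htT a (1/2) y (a2 (1/2) y) k l = exp (- Qg y k l) * cos (Fg y k l).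
Proof. intros H. unfold htT, Qg, Fg, qG, phG, a2, XX, cc. f_equal. f_equal. f_equal. field. lra.
  f_equal. field. lra. Qed.

Lemma Gy_lb y k l : Rabs (y - y0) <= 1 / 4 -> cc * (5 / 372) * nrm k l - cc * (10 / 3) <= Qg y k l.
Proof. intros H. destruct (y_bnd y0 Hy0 Hy02 y H) as [Y1 Y2]. pose proof ccG_pos.
  set (qq := (IZR k + 1/2 * IZR l + 0) ^ 2 + y ^ 2 * (IZR l + 0) ^ 2).
  assert (E : Qg y k l = cc * (/ y * qq)) by (unfold Qg, qq, XX; field; lra).
  rewrite E. pose proof (LB (IZR k) (IZR l) (1/2) 0 0 (y ^ 2)) as X.
  assert (Rabs (1/2) <= 3/2) by (rewrite Rabs_pos_eq; lra). assert (Rabs 0 <= 2) by (rewrite Rabs_R0; lra).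
  assert (Rabs 0 <= 1) by (rewrite Rabs_R0; lra). specialize (X H1 H2 H3 ltac:(nra)). fold qq in X.
  assert (Hy : 5 / 6 <= / y <= 5 / 3). { split; [apply (Rmult_le_reg_l y); [lra|]; rewrite Rinv_r by lra; lra|].
    apply (Rmult_le_reg_l y); [lra|]. rewrite Rinv_r by lra. lra. }
  apply Rle_trans with (cc * (/ y * (nrm k l / 62 - 2))).
  pose proof (nrm_ge0 k l). set (Nn := nrm k l) in *. set (u := / y) in *.
  assert (u * (Nn / 62 - 2) >= 5 / 372 * Nn - 10 / 3) by nra.
  assert (cc * (u * (Nn / 62 - 2) - (5 / 372 * Nn - 10 / 3)) >= 0) by (apply Rle_ge, Rmult_le_pos; lra).
  lra.
  apply Rmult_le_compat_l. lra. apply Rmult_le_compat_l. lra. unfold nrm. lra. Qed.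

Lemma Gy_G2e y : Rabs (y - y0) <= 1 / 4 -> G2 (htT a (1/2) y (a2 (1/2) y)).
Proof. intros H. destruct (y_bnd y0 Hy0 Hy02 y H) as [Y1 Y2].
  apply (G2_le _ (fun k l => exp (- Qg y k l))).
  apply (G2_expQ _ (Qg y) (cc * (5 / 372)) (cc * (10 / 3))). pose proof ccG_pos; lra.
  intros k l. rewrite Rabs_pos_eq by (apply Rlt_le, exp_pos). lra.
  intros; apply Gy_lb; auto.
  intros k l. rewrite Gy_eq by lra. apply exp_cos_le. Qed.

Lemma Q0g_lb k l : cc * (5 / 372) * nrm k l - cc * (10 / 3) <= Qg y0 k l.
Proof. apply Gy_lb; rewrite Rminus_diag_eq, Rabs_R0; lra. Qed.

Lemma G2_Q0g (p : Z -> Z -> R) : Md p -> G2 (fun k l => exp (- Qg y0 k l) * p k l).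
Proof. intros H. apply G2_mul; auto. apply (G2_expQ _ (Qg y0) (cc * (5 / 372)) (cc * (10 / 3))).
  pose proof ccG_pos; lra. intros; rewrite Rabs_pos_eq by (apply Rlt_le, exp_pos); lra. apply Q0g_lb. Qed.

Lemma G2_Q0g_le (f p : Z -> Z -> R) : Md p -> (forall k l, Rabs (f k l) <= exp (- Qg y0 k l) * Rabs (p k l)) -> G2 f.
Proof. intros H1 H2. apply (G2_le _ (fun k l => exp (- Qg y0 k l) * Rabs (p k l))).
  apply G2_Q0g. apply Md_abs; auto. intros k l. eapply Rle_trans. apply H2. rewrite (Rabs_pos_eq (exp (- Qg y0 k l) * Rabs (p k l))). lra.
  apply Rmult_le_pos. apply Rlt_le, exp_pos. apply Rabs_pos. Qed.

Lemma Gy_G2Dp : G2 Dp.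
Proof. apply (G2_Q0g_le _ (fun k l => Rabs (DQ k l) + Rabs (DF k l))). unfold DQ, DF, XX. md.
  intros k l. unfold Dp. rewrite Rabs_mult, (Rabs_pos_eq (exp _)) by (apply Rlt_le, exp_pos).
  apply Rmult_le_compat_l. apply Rlt_le, exp_pos.
  rewrite (Rabs_pos_eq (Rabs (DQ k l) + Rabs (DF k l))) by (pose proof (Rabs_pos (DQ k l)); pose proof (Rabs_pos (DF k l)); lra).
  replace (- (DQ k l * cos (Fg y0 k l)) - sin (Fg y0 k l) * DF k l) with (- (DQ k l * cos (Fg y0 k l) + sin (Fg y0 k l) * DF k l)) by ring.
  rewrite Rabs_Ropp. apply trig_bnd. Qed.

Lemma Gy_G2Mb : G2 Mb.
Proof. unfold Mb. apply (G2_le _ (fun k l => Bb k l * (Pb k l ^ 2 + Pb' k l + Rb k l ^ 2 + Rb' k l + Pb k l * Rb k l))).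
  apply G2_mul. apply B_G2. pose proof ccG_pos; lra. unfold Pb, Pb', Rb, Rb', XX. md.
  intros; right; f_equal; ring. Qed.

Lemma Gy_rem y q k l : Rabs (y - y0) <= 1/4 -> Rabs (q - 0) <= 1/4 ->
  Rabs (htT a (1/2) y (a2 (1/2) y) k l - htT a (1/2) y0 (a2 (1/2) y0) k l - (y - y0) * Dp k l - (q - 0) * (fun _ _ => 0) k l)
   <= Mb k l * ((y - y0) ^ 2 + (q - 0) ^ 2).
Proof. intros H1 H2. pose proof ccG_pos. destruct (y_bnd y0 Hy0 Hy02 y H1) as [Y1 Y2].
  pose proof (y0_bnd y0 Hy0 Hy02) as Y0.
  rewrite !Gy_eq by lra.
  destruct (f1_bnd y0 Hy0 Hy02 y H1) as [A1 A2]. destruct (f2_bnd y0 Hy0 Hy02 y H1) as [C1 C2].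
  set (dy := y - y0) in *.
  set (Q1 := dy * DQ k l). set (F1 := dy * DF k l).
  replace (exp (- Qg y k l) * cos (Fg y k l) - exp (- Qg y0 k l) * cos (Fg y0 k l) - dy * Dp k l - (q - 0) * 0) with
    (exp (- Qg y k l) * cos (Fg y k l) - exp (- Qg y0 k l) * cos (Fg y0 k l) - (- exp (- Qg y0 k l) * Q1 * cos (Fg y0 k l) - exp (- Qg y0 k l) * sin (Fg y0 k l) * F1))
    by (unfold Dp, Q1, F1; ring).
  assert (HQ : Qg y k l - Qg y0 k l = cc * (XX k l ^ 2 * (/ y - / y0) + IZR l ^ 2 * dy)) by (unfold Qg, dy; ring).
  assert (HQ1 : Qg y k l - Qg y0 k l - Q1 = cc * (XX k l ^ 2 * (/ y - / y0 - (- / y0 ^ 2) * dy))) by (rewrite HQ; unfold Q1, DQ; ring).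
  assert (HF : Fg y k l - Fg y0 k l = - (PI * XX k l / 4) * (/ y ^ 2 - / y0 ^ 2)) by (unfold Fg; ring).
  assert (HF1 : Fg y k l - Fg y0 k l - F1 = - (PI * XX k l / 4) * (/ y ^ 2 - / y0 ^ 2 - (- 2 / y0 ^ 3) * dy)) by (rewrite HF; unfold F1, DF; ring).
  pose proof (pow2_ge_0 (XX k l)). pose proof (pow2_ge_0 (IZR l)).
  assert (P1 : Rabs (Qg y k l - Qg y0 k l) <= Pb k l * Rabs dy).
  { rewrite HQ, Rabs_mult, (Rabs_pos_eq cc) by lra. unfold Pb. rewrite Rmult_assoc. apply Rmult_le_compat_l. lra.
    eapply Rle_trans. apply Rabs_triang.
    rewrite !Rabs_mult, (Rabs_pos_eq (XX k l ^ 2)), (Rabs_pos_eq (IZR l ^ 2)) by auto.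
    assert (XX k l ^ 2 * Rabs (/ y - / y0) <= XX k l ^ 2 * (10 * Rabs dy)) by (apply Rmult_le_compat_l; auto).
    pose proof (Rabs_pos dy). nra. }
  assert (P2 : Rabs (Qg y k l - Qg y0 k l - Q1) <= Pb' k l * Rabs dy ^ 2).
  { rewrite HQ1, Rabs_mult, (Rabs_pos_eq cc) by lra. unfold Pb'. rewrite Rmult_assoc. apply Rmult_le_compat_l. lra.
    rewrite Rabs_mult, (Rabs_pos_eq (XX k l ^ 2)) by auto. rewrite pow2_abs.
    assert (XX k l ^ 2 * Rabs (/ y - / y0 - - / y0 ^ 2 * dy) <= XX k l ^ 2 * (10 * dy ^ 2)) by (apply Rmult_le_compat_l; auto).
    nra. }
  assert (R1 : Rabs (Fg y k l - Fg y0 k l) <= Rb k l * Rabs dy).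
  { rewrite HF, Rabs_mult, Rabs_Ropp. unfold Rb. rewrite Rmult_assoc. apply Rmult_le_compat_l. apply Rabs_pos. auto. }
  assert (R2 : Rabs (Fg y k l - Fg y0 k l - F1) <= Rb' k l * Rabs dy ^ 2).
  { rewrite HF1, Rabs_mult, Rabs_Ropp. unfold Rb'. rewrite Rmult_assoc, pow2_abs. apply Rmult_le_compat_l. apply Rabs_pos. auto. }
  assert (B1 : exp (- Qg y k l) <= Bb k l).
  { unfold Bb. rewrite <- exp_plus. apply exp_le. pose proof (Gy_lb y k l H1). lra. }
  assert (B2 : exp (- Qg y0 k l) <= Bb k l).
  { unfold Bb. rewrite <- exp_plus. apply exp_le. pose proof (Q0g_lb k l). lra. }
  pose proof (gen_expcos _ _ Q1 (Pb k l) (Pb' k l) _ _ F1 (Rb k l) (Rb' k l) (Rabs dy) (Bb k l) (Rabs_pos dy) P1 P2 R1 R2 B1 B2) as G.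
  eapply Rle_trans. apply G. unfold Mb.
  assert (0 <= Pb k l) by (unfold Pb; nra). assert (0 <= Pb' k l) by (unfold Pb'; nra).
  assert (0 <= Rb k l) by (unfold Rb; pose proof (Rabs_pos (PI * XX k l / 4)); lra).
  assert (0 <= Rb' k l) by (unfold Rb'; pose proof (Rabs_pos (PI * XX k l / 4)); lra).
  assert (0 < Bb k l) by (unfold Bb; apply Rmult_lt_0_compat; apply exp_pos).
  pose proof (pow2_ge_0 (Pb k l)). pose proof (pow2_ge_0 (Rb k l)). rewrite pow2_abs. pose proof (pow2_ge_0 (q - 0)).
  assert (HW : 0 <= (Pb k l ^ 2 + Pb' k l + Rb k l ^ 2 + Rb' k l + Pb k l * Rb k l) * Bb k l).
  { apply Rmult_le_pos; [|lra]. assert (0 <= Pb k l * Rb k l) by (apply Rmult_le_pos; auto). lra. }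
  set (W := (Pb k l ^ 2 + Pb' k l + Rb k l ^ 2 + Rb' k l + Pb k l * Rb k l)) in *.
  replace (W * dy ^ 2 * Bb k l) with ((W * Bb k l) * dy ^ 2) by ring.
  apply Rmult_le_compat_l; auto. lra. Qed.

Lemma Qg_rot k l : Qg y0 (- k - l + 0)%Z k = Qg y0 k l.
Proof. unfold Qg. f_equal. apply (lin_y0 y0); auto. unfold XX. pushZ. field. Qed.

Lemma Fg_rot k l : Fg y0 (- k - l + 0)%Z k = Fg y0 k l + 2 * PI * IZR (- k).
Proof. unfold Fg. rewrite (inv_y0_2 y0) by auto. unfold XX. pushZ. field. Qed.

Lemma Gy_sum0 : z2sum Dp = 0.
Proof.
  set (w1 := fun k l => exp (- Qg y0 k l) * cos (Fg y0 k l)). set (g1 := fun k l => - DQ k l).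
  set (w2 := fun k l => exp (- Qg y0 k l) * sin (Fg y0 k l)). set (g2 := fun k l => - DF k l).
  assert (H1 : G2 (fun k l => w1 k l * g1 k l)).
  { apply (G2_Q0g_le _ g1). unfold g1, DQ, XX. md. intros k l. unfold w1. rewrite !Rabs_mult, (Rabs_pos_eq (exp _)) by (apply Rlt_le, exp_pos).
    assert (Rabs (cos (Fg y0 k l)) <= 1) by (apply Rabs_le; apply COS_bound). pose proof (exp_pos (- Qg y0 k l)).
    rewrite Rmult_assoc. apply Rmult_le_compat_l. lra. pose proof (Rabs_pos (g1 k l)). pose proof (Rabs_pos (cos (Fg y0 k l))). nra. }
  assert (H2 : G2 (fun k l => w2 k l * g2 k l)).
  { apply (G2_Q0g_le _ g2). unfold g2, DF, XX. md. intros k l. unfold w2. rewrite !Rabs_mult, (Rabs_pos_eq (exp _)) by (apply Rlt_le, exp_pos).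
    assert (Rabs (sin (Fg y0 k l)) <= 1) by (apply Rabs_le; apply SIN_bound). pose proof (exp_pos (- Qg y0 k l)).
    rewrite Rmult_assoc. apply Rmult_le_compat_l. lra. pose proof (Rabs_pos (g2 k l)). pose proof (Rabs_pos (sin (Fg y0 k l))). nra. }
  rewrite (z2sum_ext _ (fun k l => w1 k l * g1 k l + w2 k l * g2 k l)) by (intros; unfold Dp, w1, w2, g1, g2; ring).
  rewrite z2sum_plus by auto.
  rewrite (rot0 w1 g1 0), (rot0 w2 g2 0); auto. lra.
  - intros k l. unfold w2. rewrite Qg_rot, Fg_rot, sinZ. auto.
  - intros k l. unfold g2, DF, XX. pushZ. field. lra.
  - intros k l. unfold w1. rewrite Qg_rot, Fg_rot, cosZ. auto.
  - intros k l. unfold g1, DQ, XX. rewrite (inv_y0_2 y0) by auto. pushZ. field. Qed.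

End Gy.

Lemma Gy_case (a y0 : R) : 0 < a -> 0 < y0 -> y0 ^ 2 = 3 / 4 ->
  is_derive (fun y => z2sum (htT a (1/2) y (a2 (1/2) y))) y0 0.
Proof. intros Ha Hy0 Hy02.
  eapply (key (fun y (q : R) => htT a (1/2) y (a2 (1/2) y)) y0 0 (1/4) (fun _ => 0) _ (fun _ _ => 0)).
  lra. reflexivity. apply is_derive_Reals; apply derivable_pt_lim_const. intros; apply (Gy_G2e a y0); auto.
  apply (Gy_G2Dp a y0); auto. exists 1, 0. split. lra. intros; rewrite Rabs_R0; lra. apply (Gy_G2Mb a); auto.
  intros; apply (Gy_rem a y0); auto. apply (Gy_sum0 a y0); auto. Qed.

Lemma z2sum_negneg f : G2 f -> z2sum (fun k l => f (- k)%Z (- l)%Z) = z2sum f.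
Proof. intros Hf. unfold z2sum.
  rewrite <- (zsum_neg (fun k => zsum (fun l => f k l))) by (apply (AS_outer f Hf)).
  apply zsum_ext. intro k. apply (zsum_neg (fun l => f (- k)%Z l)). apply (G2_row f (- k)%Z Hf). Qed.

Lemma him_zero x y c1 c2 a : 0 < y -> 0 < a -> thetahat_im x y c1 c2 a = 0.
Proof. intros Hy Ha. unfold thetahat_im.
  set (f := fun k l => gw x y a k l * sin (2 * PI * (IZR k * c2 - IZR l * c1))).
  assert (Hm : 0 < 2 + (2 * x ^ 2 + 1) / y ^ 2).
  { assert (0 <= (2 * x ^ 2 + 1) / y ^ 2). apply Rle_div_r; [nra|]. nra. lra. }
  assert (Hb : 0 < PI * a / y). { apply Rdiv_lt_0_compat; auto. pose proof PI_RGT_0. nra. }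
  assert (Hf : G2 f).
  { apply (G2_le _ (fun k l => gw x y a k l)).
    apply (G2_expQ _ (fun k l => PI * a / y * qG x y (IZR k) (IZR l)) (PI * a / y / (2 + (2 * x ^ 2 + 1) / y ^ 2)) 0).
    apply Rdiv_lt_0_compat; auto.
    intros k l. unfold gw, qG. rewrite Rabs_pos_eq by (apply Rlt_le, exp_pos). right. f_equal. ring.
    intros k l. pose proof (LB2 (IZR k) (IZR l) x y Hy) as X. unfold nrm, qG.
    replace ((IZR k + x * IZR l) ^ 2 + y ^ 2 * IZR l ^ 2) with (IZR k ^ 2 + 2 * x * IZR k * IZR l + (x ^ 2 + y ^ 2) * IZR l ^ 2) in X by ring.
    rewrite Rminus_0_r.
    replace (PI * a / y / (2 + (2 * x ^ 2 + 1) / y ^ 2) * (IZR k ^ 2 + IZR l ^ 2)) with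
      (PI * a / y * ((IZR k ^ 2 + IZR l ^ 2) / (2 + (2 * x ^ 2 + 1) / y ^ 2))) by (unfold Rdiv; ring).
    apply Rmult_le_compat_l. lra. exact X.
    intros k l. unfold f. rewrite Rabs_mult. rewrite (Rabs_pos_eq (gw x y a k l)) by (apply Rlt_le, exp_pos).
    assert (Rabs (sin (2 * PI * (IZR k * c2 - IZR l * c1))) <= 1) by (apply Rabs_le; apply SIN_bound).
    pose proof (exp_pos (- (PI * a / y) * (IZR k ^ 2 + 2 * x * IZR k * IZR l + (x ^ 2 + y ^ 2) * IZR l ^ 2))).
    unfold gw. nra. }
  pose proof (z2sum_negneg f Hf) as E.
  rewrite (z2sum_ext _ (fun k l => -1 * f k l)) in E.
  rewrite z2sum_scal in E. fold f. lra.
  intros k l. unfold f, gw. rewrite !opp_IZR.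
  replace (2 * PI * (- IZR k * c2 - - IZR l * c1)) with (- (2 * PI * (IZR k * c2 - IZR l * c1))) by ring.
  rewrite sin_neg. replace ((- IZR k) ^ 2 + 2 * x * - IZR k * - IZR l + (x ^ 2 + y ^ 2) * (- IZR l) ^ 2) with
    (IZR k ^ 2 + 2 * x * IZR k * IZR l + (x ^ 2 + y ^ 2) * IZR l ^ 2) by ring. ring. Qed.

Lemma der_const (x : R) : is_derive (fun _ : R => 0) x 0.
Proof. apply is_derive_Reals; apply derivable_pt_lim_const. Qed.

Lemma loc_pos y0 (P : R -> Prop) : 0 < y0 -> (forall y, 0 < y -> P y) -> locally y0 P.
Proof. intros Hy H. assert (Hd : 0 < y0 / 2) by lra. exists (mkposreal _ Hd). intros t Ht. apply H.
  unfold ball in Ht; simpl in Ht. unfold AbsRing_ball, abs, minus, plus, opp in Ht; simpl in Ht.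
  apply abs_le_inv in Ht || (apply Rabs_def2 in Ht; lra). Qed.

Theorem lemma4p2 (c1 c2 : R -> R -> R) :
  (forall x y, 0 < y -> differentiable_pt c1 x y /\ differentiable_pt c2 x y) ->
  (forall y, 0 < y -> c1 (1/2) y = a1 (1/2) y /\ c2 (1/2) y = a2 (1/2) y) ->
  (forall x y, 0 < y -> c1 x y + x * c2 x y = 1/2) ->
  (forall y, 0 < y -> is_derive (fun x => c2 x y) (1/2) 0) ->
  forall alpha : R, 0 < alpha ->
  let F := fun x y => theta x y (c1 x y) (c2 x y) alpha in
  let G := fun x y => thetahat_re x y (c1 x y) (c2 x y) alpha in
  let H := fun x y => thetahat_im x y (c1 x y) (c2 x y) alpha in
  let y0 := sqrt 3 / 2 in
  (is_derive (fun x => F x y0) (1/2) 0 /\ is_derive (fun y => F (1/2) y) y0 0) /\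
  (is_derive (fun x => G x y0) (1/2) 0 /\ is_derive (fun y => G (1/2) y) y0 0) /\
  (is_derive (fun x => H x y0) (1/2) 0 /\ is_derive (fun y => H (1/2) y) y0 0).
Proof.
  intros Hdiff Hc Hlin Hder alpha Ha F G H y0.
  assert (Hs3 : 0 < sqrt 3) by (apply sqrt_lt_R0; lra).
  assert (Hy0 : 0 < y0) by (unfold y0; lra).
  assert (Hy02 : y0 ^ 2 = 3 / 4).
  { unfold y0. replace ((sqrt 3 / 2) ^ 2) with (sqrt 3 * sqrt 3 / 4) by field. rewrite sqrt_sqrt; lra. }
  assert (Ha2 : a2 (1/2) y0 = 1/3). { unfold a2. rewrite Hy02. field. }
  assert (Hs0 : c2 (1/2) y0 = 1/3). { rewrite (proj2 (Hc y0 Hy0)). auto. }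
  assert (Hlin12 : forall y, 0 < y -> a1 (1/2) y + 1/2 * a2 (1/2) y = 1/2).
  { intros y Hy. unfold a1, a2. field. lra. }
  split; [split|split; [split|split]].
  - apply (is_derive_ext (fun x => z2sum (thT alpha x y0 (c2 x y0)))).
    intro x. unfold F. rewrite theta_eq with (c1 := c1 x y0); auto.
    apply Fx_case; auto.
  - apply (is_derive_ext_loc (fun y => z2sum (thT alpha (1/2) y (a2 (1/2) y)))).
    apply loc_pos; auto. intros y Hy. unfold F. destruct (Hc y Hy) as [E1 E2]. rewrite E1, E2.
    rewrite theta_eq with (c1 := a1 (1/2) y); auto.
    apply Fy_case; auto.
  - apply (is_derive_ext (fun x => z2sum (htT alpha x y0 (c2 x y0)))).
    intro x. unfold G. rewrite hat_eq with (c1 := c1 x y0); auto.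
    apply Gx_case; auto.
  - apply (is_derive_ext_loc (fun y => z2sum (htT alpha (1/2) y (a2 (1/2) y)))).
    apply loc_pos; auto. intros y Hy. unfold G. destruct (Hc y Hy) as [E1 E2]. rewrite E1, E2.
    rewrite hat_eq with (c1 := a1 (1/2) y); auto.
    apply Gy_case; auto.
  - apply (is_derive_ext (fun _ => 0)). intro x. unfold H. rewrite him_zero; auto. apply der_const.
  - apply (is_derive_ext_loc (fun _ => 0)). apply loc_pos; auto. intros y Hy. unfold H. rewrite him_zero; auto.
    apply der_const.
Qed.
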